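(* Let $G$ be a group and $N$ a normal subgroup of $G$. Assume that $\mathrm{Q}(N)^G/\mathrm{H}^1(N)^G$ is finite dimensional and set $\ell=\dim_{\mathbb{R}}(\mathrm{Q}(N)^G/\mathrm{H}^1(N)^G)$. Then $([G,N],d_{\mathrm{scl}_{G,N}})$ is isomorphic to $(\mathbb{Z}^\ell,\|\cdot\|_1)$ as a coarse group; that is, there exist pre-coarse homomorphisms $\sigma\colon[G,N]\to\mathbb{Z}^\ell$ and $\tau\colon\mathbb{Z}^\ell\to[G,N]$ which are controlled (for $d_{\mathrm{scl}_{G,N}}$ and $\|\cdot\|_1$) and coarse inverse to each other; moreover this coarse isomorphism may be given by a quasi-isometry.
   Context: $[g,x]=gxg^{-1}x^{-1}$; $[G,N]$ is generated by $[g,x]$, $g\in G$, $x\in N$; $\mathrm{cl}_{G,N}$ is word length in $[G,N]$ with respect to these simple commutators; $\mathrm{scl}_{G,N}(y)=\lim_{n}\mathrm{cl}_{G,N}(y^n)/n$; $d_{\mathrm{scl}_{G,N}}(y_1,y_2)=\mathrm{scl}_{G,N}(y_1^{-1}y_2)$ on $[G,N]$. $\mathrm{Q}(N)^G$ is the space of homogeneous ($\psi(x^n)=n\psi(x)$) quasimorphisms ($\sup|\psi(x_1x_2)-\psi(x_1)-\psi(x_2)|<\infty$) on $N$ invariant under conjugation by $G$, and $\mathrm{H}^1(N)^G\subseteq\mathrm{Q}(N)^G$ the $G$-invariant homomorphisms $N\to\mathbb{R}$. $\mathbb{Z}^0=\{0\}$. A pre-coarse homomorphism $\alpha$ of groups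 with functions $d$ satisfies $\sup d(\alpha(gg'),\alpha(g)\alpha(g'))<\infty$; controlled means bounded distances map to uniformly bounded distances; coarse inverse means both compositions are within bounded distance of the identity maps; a quasi-isometry is a map $\alpha$ with $C_1d-D_1\le d'(\alpha\cdot,\alpha\cdot)\le C_2d+D_2$ admitting a coarse inverse with the same property. *)

(* Defs.v *)
From Stdlib Require Import Reals ZArith Arith ClassicalEpsilon.
From Coquelicot Require Import Coquelicot.
Open Scope R_scope.
Set Implicit Arguments.

Section GroupDefs.
Variables (T : Type) (mul : T -> T -> T) (inv : T -> T) (e : T).

Record is_group : Prop := {
  g_assoc : forall x y z, mul x (mul y z) = mul (mul x y) z;
  g_id_l : forall x, mul e x = x;
  g_id_r : forall x, mul x e = x;
  g_inv_l : forall x, mul (inv x) x = e;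
  g_inv_r : forall x, mul x (inv x) = e }.

(* N is a normal subgroup of G (= the whole carrier T). *)
Record is_normal_subgroup (N : T -> Prop) : Prop := {
  ns_one : N e;
  ns_mul : forall x y, N x -> N y -> N (mul x y);
  ns_inv : forall x, N x -> N (inv x);
  ns_conj : forall g x, N x -> N (mul (mul g x) (inv g)) }.

Fixpoint gpow (x : T) (n : nat) : T :=
  match n with O => e | S m => mul x (gpow x m) end.

Definition comm (g x : T) : T := mul (mul (mul g x) (inv g)) (inv x).

Fixpoint prod_comm (N : T -> Prop) (y : T) (n : nat) : Prop :=
  match n with
  | O => y = e
  | S m => exists g x z, N x /\ prod_comm N z m /\ y = mul (comm g x) z
  end.

Definition in_GN (N : T -> Prop) (y : T) : Prop := exists n, prod_comm N y n.

(* cl_{G,N}(y): the least number of simple commutators whose product is y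
   (junk value outside [G,N]). *)
Definition cl (N : T -> Prop) (y : T) : nat :=
  epsilon (inhabits 0%nat)
    (fun n => prod_comm N y n /\ forall m, prod_comm N y m -> (n <= m)%nat).

Definition scl (N : T -> Prop) (y : T) : R :=
  real (Lim_seq (fun n => INR (cl N (gpow y n)) / INR n)).

Definition dscl (N : T -> Prop) (y1 y2 : T) : R := scl N (mul (inv y1) y2).

(* Q(N)^G : G-invariant homogeneous quasimorphisms on N
   (functions T -> R, only their values on N matter). *)
Definition is_Q_inv (N : T -> Prop) (psi : T -> R) : Prop :=
  (forall x (n : nat), N x -> psi (gpow x n) = INR n * psi x) /\
  (exists D, forall x1 x2, N x1 -> N x2 ->
       Rabs (psi (mul x1 x2) - psi x1 - psi x2) <= D) /\
  (forall g x, N x -> psi (mul (mul g x) (inv g)) = psi x).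

Definition is_H1_inv (N : T -> Prop) (h : T -> R) : Prop :=
  (forall x1 x2, N x1 -> N x2 -> h (mul x1 x2) = h x1 + h x2) /\
  (forall g x, N x -> h (mul (mul g x) (inv g)) = h x).

End GroupDefs.

Fixpoint rsum (f : nat -> R) (n : nat) : R :=
  match n with O => 0 | S m => rsum f m + f m end.

(* dim_R (Q(N)^G / H^1(N)^G) = l : there are psi_0,...,psi_{l-1} in Q(N)^G
   whose classes form a basis of the quotient space (functions on N). *)
Definition quot_dim_eq (T : Type) (mul : T -> T -> T) (inv : T -> T) (e : T)
    (N : T -> Prop) (l : nat) : Prop :=
  exists psi : nat -> T -> R,
    (forall i, (i < l)%nat -> is_Q_inv mul inv e N (psi i)) /\
    (forall phi, is_Q_inv mul inv e N phi ->
       exists (c : nat -> R) (h : T -> R), is_H1_inv mul inv N h /\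
         forall x, N x -> phi x = rsum (fun i => c i * psi i x) l + h x) /\
    (forall c : nat -> R,
       (exists h : T -> R, is_H1_inv mul inv N h /\
          forall x, N x -> h x = rsum (fun i => c i * psi i x) l) ->
       forall i, (i < l)%nat -> c i = 0).

Definition Zl (l : nat) : Type := {v : nat -> Z | forall i, (l <= i)%nat -> v i = 0%Z}.

Definition Zl_add {l : nat} (v w : Zl l) : Zl l.
Proof.
  refine (exist _ (fun i => (proj1_sig v i + proj1_sig w i)%Z) _).
  intros i Hi. rewrite (proj2_sig v i Hi), (proj2_sig w i Hi). reflexivity.
Defined.

Fixpoint zsum (f : nat -> Z) (n : nat) : Z :=
  match n with O => 0%Z | S m => (zsum f m + f m)%Z end.

Definition dist1 {l : nat} (v w : Zl l) : R :=
  IZR (zsum (fun i => Z.abs (proj1_sig w i - proj1_sig v i)) l).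

(* Main.v *)
Require Import Defs.
From Stdlib Require Import Reals.
From Coquelicot Require Import Coquelicot.
Open Scope R_scope.
From Stdlib Require Import ZArith Arith Lia Lra List ClassicalEpsilon Classical FunctionalExtensionality.
From mathcomp Require boolp classical_sets.

Module G1.
Local Open Scope nat_scope.



Definition zp {T : Type} (mul : T -> T -> T) (inv : T -> T) (e : T) (x : T) (z : Z) : T :=
  match z with
  | Z0 => e
  | Zpos p => gpow mul e x (Pos.to_nat p)
  | Zneg p => inv (gpow mul e x (Pos.to_nat p))
  end.

Section Grp.
Context {T : Type} {mul : T -> T -> T} {inv : T -> T} {e : T}.
Context (HG : is_group mul inv e).
Local Infix "**" := mul (at level 40, left associativity).

Lemma mA x y z : x ** (y ** z) = x ** y ** z.
Proof. apply (g_assoc HG). Qed.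
Lemma m1l x : e ** x = x. Proof. apply (g_id_l HG). Qed.
Lemma m1r x : x ** e = x. Proof. apply (g_id_r HG). Qed.
Lemma mVl x : inv x ** x = e. Proof. apply (g_inv_l HG). Qed.
Lemma mVr x : x ** inv x = e. Proof. apply (g_inv_r HG). Qed.

Lemma mKl x y : inv x ** (x ** y) = y.
Proof. rewrite mA, mVl, m1l; auto. Qed.
Lemma mKVl x y : x ** (inv x ** y) = y.
Proof. rewrite mA, mVr, m1l; auto. Qed.
Lemma mKr x y : y ** x ** inv x = y.
Proof. rewrite <- mA, mVr, m1r; auto. Qed.
Lemma mKVr x y : y ** inv x ** x = y.
Proof. rewrite <- mA, mVl, m1r; auto. Qed.

Lemma inv_uniq x y : x ** y = e -> y = inv x.
Proof. intro H. rewrite <- (mKl x y), H, m1r. auto. Qed.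
Lemma invK x : inv (inv x) = x.
Proof. symmetry. apply inv_uniq. apply mVl. Qed.
Lemma invM x y : inv (x ** y) = inv y ** inv x.
Proof. symmetry. apply inv_uniq. rewrite <- mA, (mA y), mVr, m1l, mVr. auto. Qed.
Lemma inv1 : inv e = e.
Proof. symmetry. apply inv_uniq. apply m1l. Qed.
Lemma mcancl x y z : x ** y = x ** z -> y = z.
Proof. intro H. rewrite <- (mKl x y), H, mKl. auto. Qed.
Lemma mcancr x y z : y ** x = z ** x -> y = z.
Proof. intro H. rewrite <- (mKr x y), H, mKr. auto. Qed.

Notation gp := (gpow mul e).

Lemma gpS' x n : gp x (S n) = gp x n ** x.
Proof.
  induction n. simpl. rewrite m1l, m1r; auto.
  change (gp x (S (S n))) with (x ** gp x (S n)). rewrite IHn at 1.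
  change (gp x (S n)) with (x ** gp x n). apply mA.
Qed.
Lemma gpD x n m : gp x (n + m) = gp x n ** gp x m.
Proof. induction n; simpl. rewrite m1l; auto. rewrite IHn, mA; auto. Qed.
Lemma gpM x n m : gp x (n * m) = gp (gp x n) m.
Proof.
  induction m; simpl. rewrite Nat.mul_0_r; auto.
  rewrite Nat.mul_succ_r, Nat.add_comm, gpD, IHm. auto.
Qed.
Lemma gp1 x : gp x 1 = x. Proof. simpl. apply m1r. Qed.
Lemma gpe n : gp e n = e. Proof. induction n; simpl; auto. rewrite IHn, m1l; auto. Qed.
Lemma gpC x n m : gp x n ** gp x m = gp x m ** gp x n.
Proof. rewrite <- !gpD, Nat.add_comm. auto. Qed.
Lemma gp_conj g x n : gp (g ** x ** inv g) n = g ** gp x n ** inv g.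
Proof.
  induction n; simpl. rewrite m1r, mVr; auto.
  rewrite IHn. rewrite !mA, mKVr. auto.
Qed.
Lemma gp_inv x n : inv (gp x n) = gp (inv x) n.
Proof.
  induction n. simpl. apply inv1.
  rewrite gpS' at 1. rewrite invM, IHn. simpl. auto.
Qed.
Lemma gp_comm_inv x n m : gp x n ** inv (gp x m) = inv (gp x m) ** gp x n.
Proof.
  apply (mcancl (gp x m)). rewrite mA, gpC, mKr, mKVl. auto.
Qed.

Local Notation zp := (zp mul inv e).

Lemma zp_nat x n : zp x (Z.of_nat n) = gp x n.
Proof. destruct n; simpl; auto. rewrite SuccNat2Pos.id_succ. auto. Qed.

Lemma zp_diff x n m : zp x (Z.of_nat n - Z.of_nat m) = gp x n ** inv (gp x m).
Proof.
  destruct (le_lt_dec m n) as [H|H].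
  - replace (Z.of_nat n - Z.of_nat m)%Z with (Z.of_nat (n - m)) by lia.
    rewrite zp_nat. replace n with ((n - m) + m) at 2 by lia.
    rewrite gpD, mKr. auto.
  - replace (Z.of_nat n - Z.of_nat m)%Z with (- Z.of_nat (m - n))%Z by lia.
    assert (Hz : forall k, zp x (- Z.of_nat k) = inv (gp x k)).
    { intros [|k]; simpl. rewrite inv1; auto. rewrite SuccNat2Pos.id_succ. auto. }
    rewrite Hz. replace m with ((m - n) + n) at 2 by lia.
    rewrite gpD, invM, mKVl. auto.
Qed.

Lemma Z_as_diff (z : Z) : z = (Z.of_nat (Z.to_nat z) - Z.of_nat (Z.to_nat (- z)))%Z.
Proof. lia. Qed.

Lemma zpD x a b : zp x (a + b) = zp x a ** zp x b.
Proof.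
  rewrite (Z_as_diff a), (Z_as_diff b).
  set (n1 := Z.to_nat a). set (m1 := Z.to_nat (-a)).
  set (n2 := Z.to_nat b). set (m2 := Z.to_nat (-b)).
  replace (Z.of_nat n1 - Z.of_nat m1 + (Z.of_nat n2 - Z.of_nat m2))%Z
    with (Z.of_nat (n1 + n2) - Z.of_nat (m1 + m2))%Z by lia.
  rewrite !zp_diff, !gpD, invM.
  rewrite <- !mA. f_equal.
  assert (CD: inv (gp x m2) ** inv (gp x m1) = inv (gp x m1) ** inv (gp x m2)).
  { rewrite <- !invM, gpC; auto. }
  rewrite CD, mA, gp_comm_inv, <- mA. auto.
Qed.

Lemma zp0 x : zp x 0 = e. Proof. auto. Qed.
Lemma zp1 x : zp x 1 = x. Proof. simpl. apply m1r. Qed.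
Lemma zpN x a : zp x (- a) = inv (zp x a).
Proof.
  apply inv_uniq. rewrite <- zpD. replace (a + - a)%Z with 0%Z by lia. auto.
Qed.
Lemma zp_conj g x a : zp (g ** x ** inv g) a = g ** zp x a ** inv g.
Proof.
  destruct a; simpl. rewrite m1r, mVr; auto. apply gp_conj.
  rewrite gp_conj, !invM, invK, mA. auto.
Qed.
Lemma zp_gp x n a : zp (gp x n) a = zp x (Z.of_nat n * a).
Proof.
  rewrite (Z_as_diff a). set (p := Z.to_nat a). set (q := Z.to_nat (-a)).
  replace (Z.of_nat n * (Z.of_nat p - Z.of_nat q))%Z with (Z.of_nat (n*p) - Z.of_nat (n*q))%Z by lia.
  rewrite !zp_diff, !gpM. auto.
Qed.
End Grp.

End G1.
Import G1.

Module G2.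
Local Open Scope nat_scope.
Set Implicit Arguments.
Unset Strict Implicit.
Set Default Proof Using "All".

Lemma arch_le0 (a C : R) : (forall n : nat, (INR n * a <= C)%R) -> (a <= 0)%R.
Proof.
  intro H. destruct (Rle_or_lt a 0) as [h|h]; auto.
  destruct (INR_archimed a C h) as [n Hn]. specialize (H n). lra.
Qed.

Lemma ex_least (P : nat -> Prop) : (exists n, P n) -> exists n, P n /\ forall m, P m -> n <= m.
Proof.
  intros [n Hn]. apply NNPP. intro Hno.
  assert (forall k, forall m, m <= k -> ~ P m).
  { induction k. intros m Hm Pm. apply Hno. exists m. split; auto. intros; lia.
    intros m Hm Pm. destruct (Nat.eq_dec m (S k)).
    - subst. apply Hno. exists (S k). split; auto. intros m' Pm'.
      destruct (le_lt_dec (S k) m'); auto. exfalso. apply (IHk m'); auto. lia.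
    - apply (IHk m); auto. lia. }
  apply (H n n); auto.
Qed.

Section Comm.
Context {T : Type} {mul : T -> T -> T} {inv : T -> T} {e : T}.
Context (HG : is_group mul inv e).
Context {N : T -> Prop}.
Context (HN : is_normal_subgroup mul inv e N).
Local Infix "**" := mul (at level 40, left associativity).
Local Notation gp := (gpow mul e).
Local Notation zp := (zp mul inv e).
Local Notation pc := (prod_comm mul inv e N).
Local Notation cm := (comm mul inv).
Local Notation cl := (cl mul inv e N).
Local Notation inGN := (in_GN mul inv e N).

Lemma Ne : N e. Proof. apply (ns_one HN). Qed.
Lemma NM x y : N x -> N y -> N (x ** y). Proof. apply (ns_mul HN). Qed.
Lemma NV x : N x -> N (inv x). Proof. apply (ns_inv HN). Qed.
Lemma NJ g x : N x -> N (g ** x ** inv g). Proof. apply (ns_conj HN). Qed.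
Lemma Ngp x n : N x -> N (gp x n).
Proof. intro H. induction n; simpl. apply Ne. apply NM; auto. Qed.
Lemma Nzp x a : N x -> N (zp x a).
Proof. intro H. destruct a; simpl. apply Ne. apply Ngp; auto. apply NV, Ngp; auto. Qed.
Lemma Ncm g x : N x -> N (cm g x).
Proof. intro H. unfold comm. apply NM. apply NJ; auto. apply NV; auto. Qed.

Lemma cm_ee : cm e e = e.
Proof. unfold comm. rewrite (inv1 HG), !(m1r HG). auto. Qed.

Lemma pc_e : pc e 0. Proof. simpl. auto. Qed.
Lemma pc_S y m : pc y m -> pc y (S m).
Proof. intro H. simpl. exists e, e, y. split. apply Ne. split; auto. rewrite cm_ee, (m1l HG); auto. Qed.
Lemma pc_mono y m m' : pc y m -> m <= m' -> pc y m'.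
Proof. intros H Hm. induction Hm; auto. apply pc_S; auto. Qed.
Lemma pc_mul a b m m' : pc a m -> pc b m' -> pc (a ** b) (m + m').
Proof.
  revert a. induction m; intros a Ha Hb; simpl in *.
  - subst. rewrite (m1l HG). auto.
  - destruct Ha as [g [x [z [Hx [Hz ->]]]]]. exists g, x, (z ** b). split; auto. split; auto.
    rewrite (mA HG). auto.
Qed.
Lemma pc_cm g x : N x -> pc (cm g x) 1.
Proof. intro H. simpl. exists g, x, e. split; auto. split; auto. rewrite (m1r HG). auto. Qed.
Lemma pc_cm_mul g x y m : N x -> pc y m -> pc (cm g x ** y) (S m).
Proof. intros. simpl. exists g, x, y. auto. Qed.
Lemma pc_mul_cm g x y m : N x -> pc y m -> pc (y ** cm g x) (S m).
Proof. intros. replace (S m) with (m + 1) by lia. apply pc_mul; auto. apply pc_cm; auto. Qed.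

Lemma cj_mul t a b : t ** (a ** b) ** inv t = (t ** a ** inv t) ** (t ** b ** inv t).
Proof. rewrite <- !(mA HG). rewrite (mKl HG). auto. Qed.
Lemma cj_inv t a : t ** inv a ** inv t = inv (t ** a ** inv t).
Proof. rewrite !(invM HG), (invK HG), (mA HG). auto. Qed.

Lemma cm_conj t g x : t ** cm g x ** inv t = cm (t ** g ** inv t) (t ** x ** inv t).
Proof.
  unfold comm. rewrite (cj_mul t (g ** x ** inv g) (inv x)), (cj_mul t (g ** x) (inv g)), (cj_mul t g x), (cj_inv t g), (cj_inv t x). auto.
Qed.

Lemma pc_conj t y m : pc y m -> pc (t ** y ** inv t) m.
Proof.
  revert y. induction m; intros y H; simpl in *.
  - subst. rewrite (m1r HG), (mVr HG). auto.
  - destruct H as [g [x [z [Hx [Hz ->]]]]].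
    exists (t ** g ** inv t), (t ** x ** inv t), (t ** z ** inv t).
    split. apply NJ; auto. split. apply IHm; auto.
    rewrite <- cm_conj. rewrite <- !(mA HG). f_equal. f_equal. rewrite (mKl HG). auto.
Qed.

Lemma cm_inv g x : inv (cm g x) = cm (x ** g ** inv x) (inv x).
Proof.
  unfold comm. rewrite (invM HG _ (inv x)), (invK HG), <- (cj_inv g x).
  rewrite <- (cj_inv x g).
  rewrite <- !(mA HG). rewrite (mKl HG), (mVl HG), (m1r HG). auto.
Qed.

Lemma pc_inv y m : pc y m -> pc (inv y) m.
Proof.
  revert y. induction m; intros y H; simpl in *.
  - subst. apply (inv1 HG).
  - destruct H as [g [x [z [Hx [Hz ->]]]]].
    rewrite (invM HG). rewrite cm_inv. apply pc_mul_cm. apply NV; auto. auto.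
Qed.

Lemma pc_N y m : pc y m -> N y.
Proof.
  revert y. induction m; intros y H; simpl in *. subst; apply Ne.
  destruct H as [g [x [z [Hx [Hz ->]]]]]. apply NM. apply Ncm; auto. auto.
Qed.

Lemma cl_spec y : inGN y -> pc y (cl y) /\ forall m, pc y m -> cl y <= m.
Proof.
  intro H. unfold cl. apply epsilon_spec. apply ex_least. exact H.
Qed.
Lemma cl_pc y : inGN y -> pc y (cl y). Proof. intro H. apply (cl_spec H). Qed.
Lemma cl_le y m : pc y m -> cl y <= m.
Proof. intro H. apply (cl_spec (ex_intro _ m H)). auto. Qed.

Lemma inGN_mul a b : inGN a -> inGN b -> inGN (a ** b).
Proof. intros [m Hm] [m' Hm']. exists (m + m'). apply pc_mul; auto. Qed.
Lemma inGN_inv a : inGN a -> inGN (inv a).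
Proof. intros [m Hm]. exists m. apply pc_inv; auto. Qed.
Lemma inGN_e : inGN e. Proof. exists 0. apply pc_e. Qed.
Lemma inGN_gp a n : inGN a -> inGN (gp a n).
Proof. intro H. induction n; simpl. apply inGN_e. apply inGN_mul; auto. Qed.
Lemma inGN_zp a z : inGN a -> inGN (zp a z).
Proof. intro H. destruct z; simpl. apply inGN_e. apply inGN_gp; auto. apply inGN_inv, inGN_gp; auto. Qed.
Lemma inGN_N a : inGN a -> N a.
Proof. intros [m Hm]. apply (pc_N Hm). Qed.
Lemma inGN_conj t a : inGN a -> inGN (t ** a ** inv t).
Proof. intros [m Hm]. exists m. apply pc_conj; auto. Qed.

Lemma cl_mul a b : inGN a -> inGN b -> cl (a ** b) <= cl a + cl b.
Proof. intros Ha Hb. apply cl_le. apply pc_mul; apply cl_pc; auto. Qed.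

Lemma cl_gp_sub y n m : inGN y -> cl (gp y (n + m)) <= cl (gp y n) + cl (gp y m).
Proof. intro H. rewrite (gpD HG). apply cl_mul; apply inGN_gp; auto. Qed.

Lemma cl_gp_mul y q j : inGN y -> cl (gp y (q * j)) <= q * cl (gp y j).
Proof.
  intro H. induction q. simpl. apply cl_le. apply pc_e.
  simpl. eapply Nat.le_trans. apply cl_gp_sub; auto. lia.
Qed.

Definition av (y : T) (n : nat) : R := (INR (cl (gp y n)) / INR n)%R.

Lemma av_bound y n : inGN y -> (1 <= n) -> (0 <= av y n <= INR (cl y))%R.
Proof.
  intros H Hn. unfold av. assert (0 < INR n)%R by (apply lt_0_INR; lia).
  split. apply Rdiv_le_0_compat; auto. apply pos_INR.
  apply Rmult_le_reg_r with (INR n); auto. unfold Rdiv. rewrite Rmult_assoc, Rinv_l by lra.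
  rewrite Rmult_1_r. rewrite <- mult_INR. apply le_INR.
  replace n with (n * 1) at 1 by lia.
  eapply Nat.le_trans. apply cl_gp_mul; auto. rewrite (gp1 HG). lia.
Qed.

Lemma av_fekete y j n : inGN y -> 1 <= j -> 1 <= n ->
  (av y n <= av y j + INR j * INR (cl y) / INR n)%R.
Proof.
  intros H Hj Hn. unfold av.
  set (q := n / j). set (r := n mod j).
  assert (Hd : n = j * q + r) by (apply Nat.div_mod; lia).
  assert (Hr : r < j) by (apply Nat.mod_upper_bound; lia).
  assert (HC : cl (gp y n) <= q * cl (gp y j) + r * cl y).
  { rewrite Hd. eapply Nat.le_trans. apply cl_gp_sub; auto.
    apply Nat.add_le_mono. rewrite Nat.mul_comm. apply cl_gp_mul; auto.
    replace r with (r * 1) at 1 by lia. eapply Nat.le_trans. apply cl_gp_mul; auto.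
    rewrite (gp1 HG). lia. }
  assert (0 < INR n)%R by (apply lt_0_INR; lia).
  assert (0 < INR j)%R by (apply lt_0_INR; lia).
  apply le_INR in HC. rewrite plus_INR, !mult_INR in HC.
  assert (Hq : (INR q * INR j <= INR n)%R).
  { rewrite <- mult_INR. apply le_INR. rewrite Hd. lia. }
  assert (Hr' : (INR r <= INR j)%R) by (apply le_INR; lia).
  assert (Hc0 : (0 <= INR (cl (gp y j)))%R) by apply pos_INR.
  assert (Hc1 : (0 <= INR (cl y))%R) by apply pos_INR.
  set (A := (INR (cl (gp y j)) / INR j)%R).
  assert (E1 : INR (cl (gp y j)) = (A * INR j)%R) by (unfold A; field; lra).
  assert (HA : (0 <= A)%R) by (unfold A; apply Rdiv_le_0_compat; lra).
  rewrite E1 in HC.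
  assert (HC2 : (INR (cl (gp y n)) <= INR n * A + INR j * INR (cl y))%R) by nra.
  replace (A + INR j * INR (cl y) / INR n)%R with ((INR n * A + INR j * INR (cl y)) / INR n)%R
    by (field; lra).
  unfold Rdiv. apply Rmult_le_compat_r. left; apply Rinv_0_lt_compat; lra. exact HC2.
Qed.

Definition avset (y : T) (r : R) : Prop := exists n, 1 <= n /\ r = (- av y n)%R.

Lemma scl_char y : inGN y ->
  (forall j, 1 <= j -> (scl mul inv e N y <= av y j)%R) /\
  (forall c, (forall n, 1 <= n -> (c <= av y n)%R) -> (c <= scl mul inv e N y)%R).
Proof.
  intro H.
  assert (Hb : bound (avset y)).
  { exists 0%R. intros r [n [Hn ->]]. pose proof (av_bound H Hn). lra. }
  assert (Hne : exists r, avset y r). { exists (- av y 1)%R. exists 1. split; auto. }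
  destruct (completeness _ Hb Hne) as [m [Hm1 Hm2]].
  set (L := (- m)%R).
  assert (HL1 : forall n, 1 <= n -> (L <= av y n)%R).
  { intros n Hn. unfold L. assert (- av y n <= m)%R by (apply Hm1; exists n; auto). lra. }
  assert (HL2 : forall c, (forall n, 1 <= n -> (c <= av y n)%R) -> (c <= L)%R).
  { intros c Hc. unfold L. assert (m <= - c)%R. apply Hm2. intros r [n [Hn ->]].
    specialize (Hc n Hn). lra. lra. }
  assert (Hlim : is_lim_seq (av y) L).
  { apply is_lim_seq_spec. intro eps.
    assert (Hj : exists j, 1 <= j /\ (av y j < L + eps / 2)%R).
    { apply NNPP. intro Hno. assert (L + eps/2 <= L)%R.
      apply HL2. intros n Hn. apply Rnot_lt_le. intro. apply Hno. exists n; auto.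
      pose proof (cond_pos eps). lra. }
    destruct Hj as [j [Hj Hj2]].
    assert (Hpos : (0 < eps / 2)%R) by (pose proof (cond_pos eps); lra).
    destruct (INR_archimed (eps/2) (INR j * INR (cl y)) Hpos) as [K HK].
    exists (S K). intros n Hn.
    assert (Hn1 : 1 <= n) by lia.
    pose proof (HL1 n Hn1). pose proof (av_fekete H Hj Hn1).
    assert (0 < INR n)%R by (apply lt_0_INR; lia).
    assert (INR j * INR (cl y) / INR n < eps / 2)%R.
    { apply Rmult_lt_reg_r with (INR n); auto. unfold Rdiv. rewrite Rmult_assoc, Rinv_l by lra.
      rewrite Rmult_1_r. assert (INR K <= INR n)%R by (apply le_INR; lia).
      assert (0 <= INR j * INR (cl y))%R by (apply Rmult_le_pos; apply pos_INR).
      nra. }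
    rewrite Rabs_right by lra. lra. }
  assert (Hs : scl mul inv e N y = L).
  { unfold scl. change (real (Lim_seq (av y)) = L). rewrite (is_lim_seq_unique _ _ Hlim). auto. }
  rewrite Hs. split; auto.
Qed.

Lemma scl_le y j m : inGN y -> 1 <= j -> pc (gp y j) m -> (scl mul inv e N y <= INR m / INR j)%R.
Proof.
  intros H Hj Hp. eapply Rle_trans. apply (proj1 (scl_char H)); eauto.
  unfold av. unfold Rdiv. apply Rmult_le_compat_r.
  apply Rlt_le, Rinv_0_lt_compat, lt_0_INR; lia. apply le_INR, cl_le; auto.
Qed.

Lemma scl_ge0 y : inGN y -> (0 <= scl mul inv e N y)%R.
Proof. intro H. apply (proj2 (scl_char H)). intros n Hn. apply (av_bound H Hn). Qed.

End Comm.
Arguments av {T} mul inv e N y n.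
Arguments avset {T} mul inv e N y r.

End G2.
Import G2.

Module G3.
Local Open Scope R_scope.
Set Implicit Arguments.
Unset Strict Implicit.
Set Default Proof Using "All".

Lemma abs_arch (a C : R) : (forall n : nat, INR n * Rabs a <= C) -> a = 0.
Proof.
  intro H. pose proof (arch_le0 H). pose proof (Rabs_pos a).
  destruct (Req_dec a 0); auto. pose proof (Rabs_pos_lt a H2). lra.
Qed.

Section QM.
Context {T : Type} {mul : T -> T -> T} {inv : T -> T} {e : T}.
Context (HG : is_group mul inv e).
Context {N : T -> Prop}.
Context (HN : is_normal_subgroup mul inv e N).
Local Infix "**" := mul (at level 40, left associativity).
Local Notation gp := (gpow mul e).
Local Notation zp := (zp mul inv e).
Local Notation pc := (prod_comm mul inv e N).
Local Notation cm := (comm mul inv).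
Local Notation cl := (cl mul inv e N).
Local Notation inGN := (in_GN mul inv e N).
Local Notation scl := (scl mul inv e N).

Definition qmD (D : R) (psi : T -> R) : Prop :=
  (forall x (n : nat), N x -> psi (gp x n) = INR n * psi x) /\
  (forall x1 x2, N x1 -> N x2 -> Rabs (psi (x1 ** x2) - psi x1 - psi x2) <= D) /\
  (forall g x, N x -> psi (g ** x ** inv g) = psi x).

Lemma QinvD psi : is_Q_inv mul inv e N psi -> exists D, qmD D psi.
Proof. intros [H1 [[D H2] H3]]. exists D. split; auto. Qed.

Lemma qmD_Q D psi : qmD D psi -> is_Q_inv mul inv e N psi.
Proof. intros [H1 [H2 H3]]. split; auto. split; auto. exists D; auto. Qed.

Section OneQM.
Variables (D : R) (psi : T -> R).
Hypothesis Hq : qmD D psi.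

Lemma qm_hom x n : N x -> psi (gp x n) = INR n * psi x. Proof. apply Hq. Qed.
Lemma qm_def x1 x2 : N x1 -> N x2 -> Rabs (psi (x1 ** x2) - psi x1 - psi x2) <= D. Proof. apply Hq. Qed.
Lemma qm_conj g x : N x -> psi (g ** x ** inv g) = psi x. Proof. apply Hq. Qed.

Lemma qm_e : psi e = 0.
Proof. pose proof (qm_hom 0 (Ne HG HN)). simpl in H. lra. Qed.
Lemma qm_D0 : 0 <= D.
Proof. pose proof (qm_def (Ne HG HN) (Ne HG HN)). pose proof (Rabs_pos (psi (e ** e) - psi e - psi e)). lra. Qed.

Lemma qm_inv x : N x -> psi (inv x) = - psi x.
Proof.
  intro Hx. assert (psi x + psi (inv x) = 0); [|lra].
  apply abs_arch with D. intro n.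
  pose proof (qm_def (Ngp HG HN n Hx) (Ngp HG HN n (NV HG HN Hx))).
  assert (E: gp x n ** gp (inv x) n = e) by (rewrite <- (gp_inv HG); apply (mVr HG)).
  rewrite E, qm_e, (qm_hom n Hx), (qm_hom n (NV HG HN Hx)) in H.
  replace (0 - INR n * psi x - INR n * psi (inv x)) with (- (INR n * (psi x + psi (inv x)))) in H by ring.
  rewrite Rabs_Ropp, Rabs_mult, (Rabs_pos_eq (INR n)) in H by apply pos_INR. exact H.
Qed.

Lemma qm_zp x a : N x -> psi (zp x a) = IZR a * psi x.
Proof.
  intro Hx. destruct a; simpl.
  - rewrite qm_e. ring.
  - rewrite qm_hom; auto. rewrite INR_IZR_INZ, positive_nat_Z. auto.
  - rewrite qm_inv, qm_hom; auto. rewrite INR_IZR_INZ, positive_nat_Z. rewrite <- Pos2Z.opp_pos. rewrite opp_IZR. ring.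
    apply (Ngp HG HN); auto.
Qed.

Lemma qm_cm g x : N x -> Rabs (psi (cm g x)) <= D.
Proof.
  intro Hx. unfold comm. pose proof (qm_def (NJ HG HN g Hx) (NV HG HN Hx)).
  rewrite qm_conj, qm_inv in H; auto. replace (psi x - - psi x) with (2 * psi x) in H by ring.
  replace (psi (g ** x ** inv g ** inv x) - psi x - - psi x) with (psi (g ** x ** inv g ** inv x)) in H by ring.
  auto.
Qed.

Lemma qm_pc y m : pc y m -> Rabs (psi y) <= 2 * INR m * D.
Proof.
  revert y. induction m; intros y Hy; simpl in Hy.
  - subst. rewrite qm_e, Rabs_R0. simpl. lra.
  - destruct Hy as [g [x [z [Hx [Hz ->]]]]].
    pose proof (qm_def (Ncm HG HN g Hx) (pc_N HG HN Hz)).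
    pose proof (qm_cm g Hx). pose proof (IHm z Hz). rewrite S_INR.
    pose proof (Rabs_triang_inv (psi (cm g x ** z)) (psi (cm g x) + psi z)).
    pose proof (Rabs_triang (psi (cm g x)) (psi z)).
    replace (psi (cm g x ** z) - psi (cm g x) - psi z) with (psi (cm g x ** z) - (psi (cm g x) + psi z)) in H by ring.
    lra.
Qed.

Lemma qm_scl y : inGN y -> Rabs (psi y) <= 2 * D * scl y.
Proof.
  intro Hy. pose proof qm_D0. destruct (Req_dec D 0) as [HD|HD].
  - assert (Rabs (psi y) = 0); [|pose proof (scl_ge0 HG HN Hy); rewrite HD; nra].
    pose proof (qm_pc (cl_pc HG HN Hy)). pose proof (Rabs_pos (psi y)). rewrite HD in *. lra.
  - assert (HDp : 0 < D) by lra.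
    assert (Rabs (psi y) / (2 * D) <= scl y).
    { apply (proj2 (scl_char HG HN Hy)). intros n Hn.
      assert (Hn0 : 0 < INR n) by (apply lt_0_INR; lia).
      pose proof (qm_pc (cl_pc HG HN (inGN_gp HG HN n Hy))) as Hb.
      rewrite qm_hom in Hb by (apply (inGN_N HG HN); auto). rewrite Rabs_mult, Rabs_pos_eq in Hb by lra.
      unfold av. apply Rmult_le_reg_r with (2 * D * INR n). nra.
      replace (Rabs (psi y) / (2 * D) * (2 * D * INR n)) with (INR n * Rabs (psi y)) by (field; lra).
      replace (INR (cl (gp y n)) / INR n * (2 * D * INR n)) with (2 * INR (cl (gp y n)) * D) by (field; lra).
      exact Hb. }
    apply Rmult_le_reg_r with (/ (2 * D)). apply Rinv_0_lt_compat; lra.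
    replace (2 * D * scl y * / (2 * D)) with (scl y) by (field; lra). auto.
Qed.

End OneQM.

Lemma pc_Ak x y k : N x -> N y -> pc (gp x k ** gp y k ** inv (gp (x ** y) k)) k.
Proof.
  intros Hx Hy. induction k.
  - simpl. rewrite (m1l HG), (inv1 HG), (m1l HG). apply (pc_e HG HN).
  - assert (E : gp x (S k) ** gp y (S k) ** inv (gp (x ** y) (S k)) =
      (gp x k ** cm x (gp y k) ** inv (gp x k)) ** (gp x k ** gp y k ** inv (gp (x ** y) k))).
    { rewrite !(gpS' HG). unfold comm. rewrite !(invM HG). rewrite <- !(mA HG).
      rewrite !(mKl HG). rewrite (mKVl HG). auto. }
    rewrite E. replace (S k) with (0 + k + 1)%nat by lia.
    rewrite Nat.add_0_l. replace (k + 1)%nat with (1 + k)%nat by lia.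
    apply (pc_mul HG HN). apply (pc_conj HG HN); auto. apply (pc_cm HG HN). apply (Ngp HG HN); auto. auto.
Qed.

Lemma hom_of_vanish D psi : qmD D psi -> (forall z, inGN z -> psi z = 0) ->
  forall x y, N x -> N y -> psi (x ** y) = psi x + psi y.
Proof.
  intros Hq Hv x y Hx Hy. assert (psi (x ** y) - psi x - psi y = 0); [|lra].
  apply abs_arch with (2 * D). intro k.
  set (A := gp x k ** gp y k ** inv (gp (x ** y) k)).
  assert (HA : inGN A) by (exists k; apply pc_Ak; auto).
  assert (E : gp (x ** y) k = inv A ** (gp x k ** gp y k)).
  { unfold A. rewrite !(invM HG), (invK HG), <- !(mA HG), (mKl HG), (mVl HG), (m1r HG). auto. }
  pose proof (qm_def Hq (NV HG HN (inGN_N HG HN HA)) (NM HG HN (Ngp HG HN k Hx) (Ngp HG HN k Hy))).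
  pose proof (qm_def Hq (Ngp HG HN k Hx) (Ngp HG HN k Hy)).
  rewrite <- E in H. rewrite (Hv (inv A)) in H by (apply (inGN_inv HG HN); auto).
  rewrite (qm_hom Hq k (NM HG HN Hx Hy)) in H. rewrite (qm_hom Hq k Hx), (qm_hom Hq k Hy) in H0.
  rewrite <- (Rabs_pos_eq (INR k)) by apply pos_INR. rewrite <- Rabs_mult.
  replace (INR k * (psi (x ** y) - psi x - psi y)) with
    ((INR k * psi (x ** y) - 0 - psi (gp x k ** gp y k)) + (psi (gp x k ** gp y k) - INR k * psi x - INR k * psi y)) by ring.
  eapply Rle_trans. apply Rabs_triang. lra.
Qed.

Lemma H1_e h : is_H1_inv mul inv N h -> h e = 0.
Proof. intros [H1 H2]. pose proof (H1 e e (Ne HG HN) (Ne HG HN)). rewrite (m1l HG) in H. lra. Qed.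
Lemma H1_inv h x : is_H1_inv mul inv N h -> N x -> h (inv x) = - h x.
Proof.
  intros Hh Hx. pose proof (proj1 Hh x (inv x) Hx (NV HG HN Hx)). rewrite (mVr HG), (H1_e Hh) in H. lra.
Qed.
Lemma H1_vanish h z : is_H1_inv mul inv N h -> inGN z -> h z = 0.
Proof.
  intros Hh [m Hm]. revert z Hm. induction m; intros z Hz; simpl in Hz.
  - subst. apply H1_e; auto.
  - destruct Hz as [g [x [w [Hx [Hw ->]]]]].
    rewrite (proj1 Hh _ _ (Ncm HG HN g Hx) (pc_N HG HN Hw)).
    rewrite (IHm w Hw). unfold comm.
    rewrite (proj1 Hh _ _ (NJ HG HN g Hx) (NV HG HN Hx)).
    rewrite (proj2 Hh) by auto. rewrite H1_inv; auto. ring.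
Qed.

End QM.
Arguments qmD {T} mul inv e N D psi.

End G3.
Import G3.

Module G4.
Local Open Scope R_scope.
Set Implicit Arguments.
Unset Strict Implicit.

Section HBsec.
Variable X : Type.
Definition V := X -> Z.
Definition vadd (a b : V) : V := fun x => (a x + b x)%Z.
Definition vopp (a : V) : V := fun x => (- a x)%Z.
Definition vzero : V := fun _ => 0%Z.
Definition vscal (n : Z) (a : V) : V := fun x => (n * a x)%Z.

Lemma vext (a b : V) : (forall x, a x = b x) -> a = b.
Proof. intro H. apply functional_extensionality. exact H. Qed.

Variable P : V -> R -> Prop.
Hypothesis HP0 : P vzero 0.
Hypothesis HP0nn : forall r, P vzero r -> 0 <= r.
Hypothesis HPadd : forall a b r s, P a r -> P b s -> P (vadd a b) (r + s).
Hypothesis HPopp : forall a r, P a r -> exists s, P (vopp a) s.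

Lemma HPscal a r n : P a r -> P (vscal (Z.of_nat n) a) (INR n * r).
Proof.
  intro H. induction n.
  - replace (vscal (Z.of_nat 0) a) with vzero by (apply vext; intro; unfold vscal, vzero; lia).
    simpl. rewrite Rmult_0_l. auto.
  - replace (vscal (Z.of_nat (S n)) a) with (vadd (vscal (Z.of_nat n) a) a)
      by (apply vext; intro; unfold vscal, vadd; lia).
    rewrite S_INR. replace ((INR n + 1) * r) with (INR n * r + r) by ring. apply HPadd; auto.
Qed.

Definition good (W : V -> Prop) (f : V -> R) : Prop :=
  W vzero /\ (forall a b, W a -> W b -> W (vadd a b)) /\ (forall a, W a -> W (vopp a)) /\
  (forall a b, W a -> W b -> f (vadd a b) = f a + f b) /\ (forall a r, W a -> P a r -> f a <= r).

Section Ext.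
Variables (W : V -> Prop) (f : V -> R).
Hypothesis Hg : good W f.
Variable v : V.

Lemma g_zero : W vzero. Proof. apply Hg. Qed.
Lemma g_add a b : W a -> W b -> W (vadd a b). Proof. apply Hg. Qed.
Lemma g_opp a : W a -> W (vopp a). Proof. apply Hg. Qed.
Lemma g_fadd a b : W a -> W b -> f (vadd a b) = f a + f b. Proof. apply Hg. Qed.
Lemma g_dom a r : W a -> P a r -> f a <= r. Proof. apply Hg. Qed.

Lemma g_f0 : f vzero = 0.
Proof.
  pose proof (g_fadd g_zero g_zero).
  replace (vadd vzero vzero) with vzero in H by (apply vext; intro; unfold vadd, vzero; lia). lra.
Qed.
Lemma g_fopp a : W a -> f (vopp a) = - f a.
Proof.
  intro Ha. pose proof (g_fadd Ha (g_opp Ha)).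
  replace (vadd a (vopp a)) with vzero in H by (apply vext; intro; unfold vadd, vopp, vzero; lia).
  rewrite g_f0 in H. lra.
Qed.
Lemma g_scal a n : W a -> W (vscal (Z.of_nat n) a) /\ f (vscal (Z.of_nat n) a) = INR n * f a.
Proof.
  intro Ha. induction n.
  - replace (vscal (Z.of_nat 0) a) with vzero by (apply vext; intro; unfold vscal, vzero; lia).
    split. apply g_zero. rewrite g_f0. simpl. ring.
  - replace (vscal (Z.of_nat (S n)) a) with (vadd (vscal (Z.of_nat n) a) a)
      by (apply vext; intro; unfold vscal, vadd; lia).
    destruct IHn as [H1 H2]. split. apply g_add; auto.
    rewrite g_fadd, H2, S_INR by auto. ring.
Qed.

Definition Aset (x : R) : Prop := exists w m r, W w /\ (1 <= m)%nat /\
  P (vadd w (vscal (- Z.of_nat m) v)) r /\ x = (f w - r) / INR m.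
Definition Bset (x : R) : Prop := exists w n r, W w /\ (1 <= n)%nat /\
  P (vadd w (vscal (Z.of_nat n) v)) r /\ x = (r - f w) / INR n.

Lemma AB_le a b : Aset a -> Bset b -> a <= b.
Proof.
  intros [w1 [m [r1 [Hw1 [Hm [HP1 ->]]]]]] [w2 [n [r2 [Hw2 [Hn [HP2 ->]]]]]].
  pose proof (HPadd (HPscal n HP1) (HPscal m HP2)) as HP3.
  replace (vadd (vscal (Z.of_nat n) (vadd w1 (vscal (- Z.of_nat m) v)))
                (vscal (Z.of_nat m) (vadd w2 (vscal (Z.of_nat n) v))))
    with (vadd (vscal (Z.of_nat n) w1) (vscal (Z.of_nat m) w2)) in HP3
    by (apply vext; intro; unfold vadd, vscal; lia).
  destruct (g_scal n Hw1) as [Ha1 Hb1]. destruct (g_scal m Hw2) as [Ha2 Hb2].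
  pose proof (g_dom (g_add Ha1 Ha2) HP3). rewrite g_fadd, Hb1, Hb2 in H by auto.
  assert (0 < INR n) by (apply lt_0_INR; lia). assert (0 < INR m) by (apply lt_0_INR; lia).
  unfold Rdiv. apply Rmult_le_reg_r with (INR m * INR n). nra.
  replace ((f w1 - r1) * / INR m * (INR m * INR n)) with (INR n * (f w1 - r1)) by (field; lra).
  replace ((r2 - f w2) * / INR n * (INR m * INR n)) with (INR m * (r2 - f w2)) by (field; lra).
  lra.
Qed.

Lemma A_ne_B : (exists a, Aset a) -> exists b, Bset b.
Proof.
  intros [a [w [m [r [Hw [Hm [HPa _]]]]]]]. destruct (HPopp HPa) as [s Hs].
  exists ((s - f (vopp w)) / INR m). exists (vopp w), m, s. split. apply g_opp; auto.
  split; auto. split; auto.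
  replace (vadd (vopp w) (vscal (Z.of_nat m) v)) with (vopp (vadd w (vscal (- Z.of_nat m) v)))
    by (apply vext; intro; unfold vadd, vopp, vscal; lia). auto.
Qed.

Lemma B_ne_A : (exists b, Bset b) -> exists a, Aset a.
Proof.
  intros [b [w [n [r [Hw [Hn [HPb _]]]]]]]. destruct (HPopp HPb) as [s Hs].
  exists ((f (vopp w) - s) / INR n). exists (vopp w), n, s. split. apply g_opp; auto.
  split; auto. split; auto.
  replace (vadd (vopp w) (vscal (- Z.of_nat n) v)) with (vopp (vadd w (vscal (Z.of_nat n) v)))
    by (apply vext; intro; unfold vadd, vopp, vscal; lia). auto.
Qed.

Lemma choose_c : exists c, (forall a, Aset a -> a <= c) /\ (forall b, Bset b -> c <= b) /\
  ((exists b, Bset b) -> forall L, (forall b, Bset b -> L <= b) -> L <= c).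
Proof.
  destruct (classic (exists b, Bset b)) as [HB|HB].
  - set (E := fun x => Bset (- x)).
    assert (Hb : bound E).
    { destruct (B_ne_A HB) as [a Ha]. exists (- a). intros x Hx. pose proof (AB_le Ha Hx). lra. }
    assert (Hne : exists x, E x).
    { destruct HB as [b Hb']. exists (- b). unfold E. rewrite Ropp_involutive. auto. }
    destruct (completeness E Hb Hne) as [m [Hm1 Hm2]].
    exists (- m). split; [|split].
    + intros a Ha. assert (m <= - a); [|lra]. apply Hm2. intros x Hx. pose proof (AB_le Ha Hx). lra.
    + intros b Hb'. assert (- b <= m); [|lra]. apply Hm1. unfold E. rewrite Ropp_involutive. auto.
    + intros _ L HL. assert (m <= - L); [|lra]. apply Hm2. intros x Hx. pose proof (HL _ Hx). lra.
  - exists 0. split. intros a Ha. exfalso. apply HB. apply A_ne_B. exists a; auto.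
    split. intros b Hb. exfalso. apply HB. exists b; auto.
    intros H. exfalso; auto.
Qed.

Lemma cval (c : R) (HA : forall a, Aset a -> a <= c) (HB : forall b, Bset b -> c <= b) k :
  (1 <= k)%nat -> W (vscal (Z.of_nat k) v) -> f (vscal (Z.of_nat k) v) = INR k * c.
Proof.
  intros Hk Hw. assert (Hk0 : 0 < INR k) by (apply lt_0_INR; lia).
  assert (H1 : c <= (0 - f (vopp (vscal (Z.of_nat k) v))) / INR k).
  { apply HB. exists (vopp (vscal (Z.of_nat k) v)), k, 0. split. apply g_opp; auto.
    split; auto. split; auto.
    replace (vadd (vopp (vscal (Z.of_nat k) v)) (vscal (Z.of_nat k) v)) with vzero
      by (apply vext; intro; unfold vadd, vopp, vscal, vzero; lia). auto. }
  assert (H2 : (f (vscal (Z.of_nat k) v) - 0) / INR k <= c).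
  { apply HA. exists (vscal (Z.of_nat k) v), k, 0. split; auto. split; auto. split; auto.
    replace (vadd (vscal (Z.of_nat k) v) (vscal (- Z.of_nat k) v)) with vzero
      by (apply vext; intro; unfold vadd, vscal, vzero; lia). auto. }
  rewrite g_fopp in H1 by auto.
  apply Rle_antisym.
  - apply Rmult_le_reg_r with (/ INR k). apply Rinv_0_lt_compat; auto.
    replace (INR k * c * / INR k) with c by (field; lra).
    replace (f (vscal (Z.of_nat k) v) * / INR k) with ((f (vscal (Z.of_nat k) v) - 0) / INR k) by (unfold Rdiv; ring).
    auto.
  - apply Rmult_le_reg_r with (/ INR k). apply Rinv_0_lt_compat; auto.
    replace (INR k * c * / INR k) with c by (field; lra).
    replace (f (vscal (Z.of_nat k) v) * / INR k) with ((0 - - f (vscal (Z.of_nat k) v)) / INR k) by (unfold Rdiv; ring).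
    auto.
Qed.

Lemma cvalZ (c : R) (HA : forall a, Aset a -> a <= c) (HB : forall b, Bset b -> c <= b) d :
  W (vscal d v) -> f (vscal d v) = IZR d * c.
Proof.
  intro Hw. destruct (Z.lt_trichotomy d 0) as [Hd|[Hd|Hd]].
  - set (k := Z.to_nat (- d)).
    assert (E : vscal d v = vopp (vscal (Z.of_nat k) v))
      by (apply vext; intro; unfold vscal, vopp, k; lia).
    rewrite E in *.
    assert (W (vscal (Z.of_nat k) v)).
    { replace (vscal (Z.of_nat k) v) with (vopp (vopp (vscal (Z.of_nat k) v)))
        by (apply vext; intro; unfold vopp; lia). apply g_opp; auto. }
    rewrite g_fopp by auto.
    rewrite (cval HA HB) by (auto; unfold k; lia).
    replace d with (- Z.of_nat k)%Z by (unfold k; lia). rewrite opp_IZR, <- INR_IZR_INZ. ring.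
  - subst. replace (vscal 0 v) with vzero by (apply vext; intro; unfold vscal, vzero; lia).
    rewrite g_f0. simpl. ring.
  - set (k := Z.to_nat d). replace d with (Z.of_nat k) in * by (unfold k; lia).
    rewrite (cval HA HB) by (auto; unfold k; lia). rewrite <- INR_IZR_INZ. auto.
Qed.

Lemma extend : exists W' f', good W' f' /\ (forall a, W a -> W' a /\ f' a = f a) /\ W' v /\
  ((exists b, Bset b) -> forall L, (forall b, Bset b -> L <= b) -> L <= f' v).
Proof.
  destruct choose_c as [c [HA [HB HL]]].
  set (W' := fun u => exists w n, W w /\ u = vadd w (vscal n v)).
  set (F := fun u => let wn := epsilon (inhabits (vzero, 0%Z))
              (fun wn => W (fst wn) /\ u = vadd (fst wn) (vscal (snd wn) v)) in
              f (fst wn) + IZR (snd wn) * c).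
  assert (WD : forall w1 w2 n1 n2, W w1 -> W w2 -> vadd w1 (vscal n1 v) = vadd w2 (vscal n2 v) ->
            f w1 + IZR n1 * c = f w2 + IZR n2 * c).
  { intros w1 w2 n1 n2 H1 H2 E.
    assert (E2 : vadd w1 (vopp w2) = vscal (n2 - n1) v).
    { apply vext; intro x. pose proof (f_equal (fun g => g x) E) as Ex. unfold vadd, vscal, vopp in *. lia. }
    assert (Hw : W (vscal (n2 - n1) v)) by (rewrite <- E2; apply g_add; auto; apply g_opp; auto).
    pose proof (cvalZ HA HB Hw) as Hc. rewrite <- E2, g_fadd, g_fopp in Hc by (auto; apply g_opp; auto).
    rewrite minus_IZR in Hc. lra. }
  assert (Fval : forall w n, W w -> F (vadd w (vscal n v)) = f w + IZR n * c).
  { intros w n Hw. unfold F.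
    assert (Hex : exists wn : V * Z, W (fst wn) /\ vadd w (vscal n v) = vadd (fst wn) (vscal (snd wn) v)).
    { exists (w, n). simpl. auto. }
    destruct (epsilon_spec (inhabits (vzero, 0%Z)) _ Hex) as [H1 H2].
    simpl. symmetry. apply WD; auto. }
  exists W', F. split; [|split; [|split]].
  - split; [|split; [|split; [|split]]].
    + exists vzero, 0%Z. split. apply g_zero. apply vext; intro; unfold vadd, vscal, vzero; lia.
    + intros a b [w1 [n1 [H1 ->]]] [w2 [n2 [H2 ->]]]. exists (vadd w1 w2), (n1 + n2)%Z.
      split. apply g_add; auto. apply vext; intro; unfold vadd, vscal; lia.
    + intros a [w [n [H ->]]]. exists (vopp w), (- n)%Z. split. apply g_opp; auto.
      apply vext; intro; unfold vadd, vscal, vopp; lia.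
    + intros a b [w1 [n1 [H1 ->]]] [w2 [n2 [H2 ->]]].
      replace (vadd (vadd w1 (vscal n1 v)) (vadd w2 (vscal n2 v))) with (vadd (vadd w1 w2) (vscal (n1 + n2) v))
        by (apply vext; intro; unfold vadd, vscal; lia).
      rewrite !Fval by (auto; apply g_add; auto). rewrite g_fadd, plus_IZR by auto. ring.
    + intros a r [w [n [Hw ->]]] HPa. rewrite Fval by auto.
      destruct (Z.lt_trichotomy n 0) as [Hn|[Hn|Hn]].
      * set (k := Z.to_nat (- n)). replace n with (- Z.of_nat k)%Z in * by (unfold k; lia).
        assert (Hk : 0 < INR k) by (apply lt_0_INR; unfold k; lia).
        assert (Hle : (f w - r) / INR k <= c).
        { apply HA. exists w, k, r. split; auto. split. unfold k; lia. split; auto. }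
        rewrite opp_IZR, <- INR_IZR_INZ.
        apply Rmult_le_compat_r with (r := INR k) in Hle; [|lra].
        replace ((f w - r) / INR k * INR k) with (f w - r) in Hle by (field; lra). nra.
      * subst. replace (vadd w (vscal 0 v)) with w in HPa by (apply vext; intro; unfold vadd, vscal; lia).
        simpl. rewrite Rmult_0_l, Rplus_0_r. apply g_dom; auto.
      * set (k := Z.to_nat n). replace n with (Z.of_nat k) in * by (unfold k; lia).
        assert (Hk : 0 < INR k) by (apply lt_0_INR; unfold k; lia).
        assert (Hle : c <= (r - f w) / INR k).
        { apply HB. exists w, k, r. split; auto. split. unfold k; lia. split; auto. }
        rewrite <- INR_IZR_INZ.
        apply Rmult_le_compat_r with (r := INR k) in Hle; [|lra].
        replace ((r - f w) / INR k * INR k) with (r - f w) in Hle by (field; lra). nra.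
  - intros a Ha. split. exists a, 0%Z. split; auto. apply vext; intro; unfold vadd, vscal; lia.
    replace a with (vadd a (vscal 0 v)) at 1 by (apply vext; intro; unfold vadd, vscal; lia).
    rewrite Fval by auto. simpl. ring.
  - exists vzero, 1%Z. split. apply g_zero. apply vext; intro; unfold vadd, vscal, vzero; lia.
  - intros Hne L HLb.
    replace v with (vadd vzero (vscal 1 v)) by (apply vext; intro; unfold vadd, vscal, vzero; lia).
    rewrite Fval by apply g_zero. rewrite g_f0. simpl. rewrite Rplus_0_l, Rmult_1_l. apply HL; auto.
Qed.

End Ext.
Section Main.
Variables (v0 : V) (L : R).
Hypothesis Hv0 : exists r, P v0 r.
Hypothesis HL : forall n r, (1 <= n)%nat -> P (vscal (Z.of_nat n) v0) r -> INR n * L <= r.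

Theorem HB_main : exists F : V -> R, (forall a b, F (vadd a b) = F a + F b) /\
  (forall a r, P a r -> F a <= r) /\ L <= F v0.
Proof.
  set (W0 := fun a : V => a = vzero). set (f0 := fun _ : V => 0).
  assert (Hg0 : good W0 f0).
  { unfold W0, f0. split; [|split; [|split; [|split]]]; auto.
    - intros a b -> ->. apply vext; intro; unfold vadd, vzero; lia.
    - intros a ->. apply vext; intro; unfold vopp, vzero; lia.
    - intros. ring.
    - intros a r -> H. apply HP0nn; auto. }
  destruct (extend Hg0 v0) as [W1 [f1 [Hg1 [Hext1 [HW1 HL1]]]]].
  assert (Hc0 : L <= f1 v0).
  { apply HL1.
    - destruct Hv0 as [r Hr]. exists ((r - f0 vzero) / INR 1). exists vzero, 1%nat, r.
      split. reflexivity. split. lia. split; auto.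
      replace (vadd vzero (vscal (Z.of_nat 1) v0)) with v0 by (apply vext; intro; unfold vadd, vscal, vzero; lia). auto.
    - intros b [w [n [r [Hw [Hn [HP ->]]]]]]. unfold W0 in Hw. subst w.
      replace (vadd vzero (vscal (Z.of_nat n) v0)) with (vscal (Z.of_nat n) v0) in HP
        by (apply vext; intro; unfold vadd, vscal, vzero; lia).
      pose proof (HL Hn HP). assert (0 < INR n) by (apply lt_0_INR; lia).
      unfold f0. apply Rmult_le_reg_r with (INR n); auto.
      replace ((r - 0) / INR n * INR n) with r by (field; lra). lra. }
  set (c0 := f1 v0).
  set (E := {p : (V -> Prop) * (V -> R) | good (fst p) (snd p) /\ fst p v0 /\ snd p v0 = c0}).
  set (WW := fun s : E => fst (proj1_sig s)). set (ff := fun s : E => snd (proj1_sig s)).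
  assert (HWW : forall s, good (WW s) (ff s) /\ WW s v0 /\ ff s v0 = c0) by (intro s; exact (proj2_sig s)).
  set (Rp := fun s t : E => (forall a, WW s a -> WW t a) /\ (forall a, WW s a -> ff t a = ff s a)).
  set (Rb := fun s t : E => boolp.asbool (Rp s t)).
  assert (HR : forall s t, is_true (Rb s t) <-> Rp s t).
  { intros. split. apply boolp.asboolW. apply boolp.asboolT. }
  set (t0 := exist (fun p : (V -> Prop) * (V -> R) => good (fst p) (snd p) /\ fst p v0 /\ snd p v0 = c0)
               (W1, f1) (conj Hg1 (conj HW1 eq_refl)) : E).
  destruct (@classical_sets.ZL_preorder E t0 Rb) as [t Ht].
  - intro s. apply HR. split; auto.
  - intros r s t Hrs Hst. apply HR in Hrs. apply HR in Hst. apply HR.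
    destruct Hrs as [A1 A2]. destruct Hst as [B1 B2]. split; auto.
    intros a Ha. rewrite B2 by auto. auto.
  - intros A Htot.
    destruct (classic (exists s0, A s0)) as [[s0 Hs0]|Hne].
    2:{ exists t0. intros s Hs. exfalso. apply Hne. exists s; auto. }
    set (WU := fun a => exists s, A s /\ WW s a).
    set (pick := fun a => epsilon (inhabits t0) (fun s => A s /\ WW s a)).
    set (fU := fun a => ff (pick a) a).
    assert (Hcmp : forall s1 s2, A s1 -> A s2 -> Rp s1 s2 \/ Rp s2 s1).
    { intros s1 s2 H1 H2. destruct (Htot s1 s2 H1 H2) as [H|H]; [left|right]; apply HR; auto. }
    assert (fU_val : forall s a, A s -> WW s a -> fU a = ff s a).
    { intros s a Hs Ha. unfold fU.
      destruct (epsilon_spec (inhabits t0) (fun s => A s /\ WW s a) (ex_intro _ s (conj Hs Ha))) as [H1 H2].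
      fold (pick a) in H1, H2.
      destruct (Hcmp s (pick a) Hs H1) as [[C1 C2]|[C1 C2]]. rewrite C2 by auto. auto.
      rewrite C2 by auto. auto. }
    assert (Hjoin : forall a b, WU a -> WU b -> exists s, A s /\ WW s a /\ WW s b).
    { intros a b [s1 [H1 Ha]] [s2 [H2 Hb]]. destruct (Hcmp s1 s2 H1 H2) as [[C1 C2]|[C1 C2]].
      exists s2; auto. exists s1; auto. }
    assert (HgU : good WU fU).
    { split; [|split; [|split; [|split]]].
      - exists s0. split; auto. apply (proj1 (proj1 (HWW s0))).
      - intros a b Ha Hb. destruct (Hjoin a b Ha Hb) as [s [Hs [Ha' Hb']]]. exists s. split; auto.
        apply (proj1 (proj2 (proj1 (HWW s)))); auto.
      - intros a [s [Hs Ha]]. exists s. split; auto. apply (proj1 (proj2 (proj2 (proj1 (HWW s))))); auto.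
      - intros a b Ha Hb. destruct (Hjoin a b Ha Hb) as [s [Hs [Ha' Hb']]].
        pose proof (proj1 (proj2 (proj1 (HWW s)))) as Hadd.
        rewrite (fU_val s (vadd a b)), (fU_val s a), (fU_val s b) by auto.
        apply (proj1 (proj2 (proj2 (proj2 (proj1 (HWW s)))))); auto.
      - intros a r [s [Hs Ha]] HPa. rewrite (fU_val s a) by auto.
        apply (proj2 (proj2 (proj2 (proj2 (proj1 (HWW s)))))); auto. }
    assert (HU2 : WU v0 /\ fU v0 = c0).
    { split. exists s0. split; auto. apply (HWW s0).
      rewrite (fU_val s0 v0) by (auto; apply (HWW s0)). apply (HWW s0). }
    exists (exist (fun p : (V -> Prop) * (V -> R) => good (fst p) (snd p) /\ fst p v0 /\ snd p v0 = c0)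
               (WU, fU) (conj HgU HU2)).
    intros s Hs. apply HR. split.
    + intros a Ha. simpl. exists s; auto.
    + intros a Ha. simpl. apply fU_val; auto.
  -
    assert (Hall : forall v, WW t v).
    { intro v. destruct (HWW t) as [Hgt [Ht0 Htc]].
      destruct (extend Hgt v) as [W' [f' [Hg' [Hext' [HW' _]]]]].
      assert (H2 : W' v0 /\ f' v0 = c0).
      { destruct (Hext' v0 Ht0) as [A1 A2]. split; auto. rewrite A2. auto. }
      set (t' := exist (fun p : (V -> Prop) * (V -> R) => good (fst p) (snd p) /\ fst p v0 /\ snd p v0 = c0)
               (W', f') (conj Hg' H2) : E).
      assert (Rtt' : Rp t t').
      { split; intros a Ha; simpl; apply Hext'; auto. }
      apply HR in Rtt'. apply Ht in Rtt'. apply HR in Rtt'. destruct Rtt' as [C1 _]. apply C1. exact HW'. }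
    exists (ff t). destruct (HWW t) as [[_ [_ [_ [Hadd Hdom]]]] [_ Htc]]. split; [|split].
    + intros a b. apply Hadd; apply Hall.
    + intros a r Ha. apply Hdom; auto.
    + rewrite Htc. unfold c0. auto.
Qed.
End Main.

End HBsec.

End G4.
Import G4.

Module G5.
Local Open Scope R_scope.
Set Implicit Arguments.
Unset Strict Implicit.

Section Chains.
Context {T : Type} {mul : T -> T -> T} {inv : T -> T} {e : T}.
Context (HG : is_group mul inv e).
Context {N : T -> Prop}.
Context (HN : is_normal_subgroup mul inv e N).
Local Infix "**" := mul (at level 40, left associativity).
Local Notation gp := (gpow mul e).
Local Notation zp := (zp mul inv e).
Local Notation pc := (prod_comm mul inv e N).
Local Notation cm := (comm mul inv).
Local Notation inGN := (in_GN mul inv e N).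
Local Notation scl := (scl mul inv e N).

Local Notation mA := (G1.mA HG).
Local Notation m1l := (G1.m1l HG).
Local Notation m1r := (G1.m1r HG).
Local Notation mVl := (G1.mVl HG).
Local Notation mVr := (G1.mVr HG).
Local Notation mKl := (G1.mKl HG).
Local Notation mKVl := (G1.mKVl HG).
Local Notation invM := (G1.invM HG).
Local Notation invK := (G1.invK HG).
Local Notation inv1 := (G1.inv1 HG).
Local Notation zpD := (G1.zpD HG).
Local Notation zpN := (G1.zpN HG).
Local Notation pc_mul := (G2.pc_mul HG HN).
Local Notation pc_conj := (G2.pc_conj HG HN).
Local Notation pc_inv := (G2.pc_inv HG HN).
Local Notation pc_e := (G2.pc_e HG HN).
Local Notation pc_cm := (G2.pc_cm HG HN).
Local Notation pc_mono := (G2.pc_mono HG HN).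
Local Notation pc_N := (G2.pc_N HG HN).
Local Notation NM := (G2.NM HG HN).
Local Notation NV := (G2.NV HG HN).
Local Notation NJ := (G2.NJ HG HN).
Local Notation Nzp := (G2.Nzp HG HN).
Local Notation cj_inv := (G2.cj_inv HG HN).

Definition dlt (x : T) : V T := fun y => if excluded_middle_informative (y = x) then 1%Z else 0%Z.

Definition entry := ((T * Z) * T)%type.
Definition chain (L : list entry) : V T :=
  fold_right (fun x acc => vadd (vscal (snd (fst x)) (dlt (fst (fst x)))) acc) (@vzero T) L.
Definition item (K : Z) (x : entry) : T :=
  snd x ** zp (fst (fst x)) (K * snd (fst x)) ** inv (snd x).
Definition CPK (K : Z) (L : list entry) : T := fold_right (fun x acc => item K x ** acc) e L.
Definition allN (L : list entry) : Prop := forall x, In x L -> N (fst (fst x)).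

Lemma chain_cons x L y : chain (x :: L) y = (snd (fst x) * dlt (fst (fst x)) y + chain L y)%Z.
Proof. reflexivity. Qed.
Lemma chain_app L1 L2 : chain (L1 ++ L2) = vadd (chain L1) (chain L2).
Proof.
  induction L1; simpl; apply vext; intro y; unfold vadd, vzero; auto.
  pose proof (f_equal (fun g => g y) IHL1). simpl in H. unfold vadd, vscal in *. rewrite H. lia.
Qed.
Lemma CPK_app K L1 L2 : CPK K (L1 ++ L2) = CPK K L1 ** CPK K L2.
Proof. induction L1; simpl. rewrite m1l; auto. rewrite IHL1, mA. auto. Qed.
Lemma chain_strip L1 L2 : map fst L1 = map fst L2 -> chain L1 = chain L2.
Proof.
  revert L2. induction L1; intros [|b L2] H; simpl in *; try discriminate; auto.
  injection H. intros H1 H2. rewrite H2, (IHL1 L2 H1). auto.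
Qed.
Lemma allN_strip L1 L2 : map fst L1 = map fst L2 -> allN L2 -> allN L1.
Proof.
  intros H H2 x Hx. assert (In (fst x) (map fst L2)) by (rewrite <- H; apply in_map; auto).
  apply in_map_iff in H0. destruct H0 as [y [Hy1 Hy2]]. rewrite <- Hy1. apply H2; auto.
Qed.
Lemma item_N K x : N (fst (fst x)) -> N (item K x).
Proof. intro H. unfold item. apply NJ. apply Nzp. auto. Qed.
Lemma CPK_N K L : allN L -> N (CPK K L).
Proof.
  induction L; intro H; simpl. apply (Ne HG HN). apply NM. apply item_N. apply H; simpl; auto.
  apply IHL. intros x Hx. apply H; simpl; auto.
Qed.
Lemma dlt_eq x : dlt x x = 1%Z.
Proof. unfold dlt. destruct (excluded_middle_informative (x = x)); auto. tauto. Qed.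
Lemma dlt_neq x y : y <> x -> dlt x y = 0%Z.
Proof. intro H. unfold dlt. destruct (excluded_middle_informative (y = x)); auto. tauto. Qed.

Lemma merge (K1 K2 : Z) L : allN L -> exists w, pc w (length L) /\
  CPK K1 L ** CPK K2 L = CPK (K1 + K2) L ** w.
Proof.
  induction L as [|x L IH]; intro HL.
  - exists e. split. apply pc_e. simpl. rewrite !m1l. auto.
  - destruct IH as [w' [Hw' E']]. intros y Hy. apply HL; simpl; auto.
    destruct x as [[g a] t].
    change (CPK K1 ((g,a,t)::L)) with (item K1 (g,a,t) ** CPK K1 L).
    change (CPK K2 ((g,a,t)::L)) with (item K2 (g,a,t) ** CPK K2 L).
    change (CPK (K1 + K2) ((g,a,t)::L)) with (item (K1 + K2) (g,a,t) ** CPK (K1 + K2) L).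
    set (X' := CPK K1 L). set (Y' := CPK K2 L). set (Z' := CPK (K1 + K2) L).
    set (p := item K1 (g, a, t)). set (q := item K2 (g, a, t)).
    assert (HgN : N g) by (apply (HL (g, a, t)); simpl; auto).
    assert (HqN : N q) by (apply item_N; auto).
    assert (HXN : N X') by (apply CPK_N; intros y Hy; apply HL; simpl; auto).
    assert (Hpq : p ** q = item (K1 + K2) (g, a, t)).
    { unfold p, q, item. simpl. rewrite <- !mA. rewrite mKl. f_equal. rewrite !mA. f_equal.
      rewrite <- zpD. f_equal. lia. }
    set (c := cm (inv X') (inv q)).
    exists (w' ** (inv Y' ** c ** Y')). split.
    + change (length ((g, a, t) :: L)) with (S (length L)). rewrite <- Nat.add_1_r. apply pc_mul; auto.
      replace (inv Y' ** c ** Y') with (inv Y' ** c ** inv (inv Y')) by (rewrite invK; auto).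
      apply pc_conj. apply pc_cm. apply NV; auto.
    + rewrite <- Hpq. fold X' Y' Z'. unfold c, comm. rewrite !invK.
      rewrite <- !mA. f_equal.
      fold X' Y' Z' in E'. rewrite (mA Z' w'), <- E', <- !mA, !mKVl. reflexivity.
Qed.

Lemma CPK_ext K1 K2 L : K1 = K2 -> CPK K1 L = CPK K2 L.
Proof. intros ->. auto. Qed.

Lemma regroup k L m j : allN L -> pc (CPK (Z.of_nat k) L) m -> (1 <= j)%nat ->
  pc (CPK (Z.of_nat (k * j)) L) (j * m + (j - 1) * length L).
Proof.
  intros HL Hm Hj. induction j. lia.
  destruct (Nat.eq_dec j 0) as [->|Hj0].
  - replace (1 * m + (1 - 1) * length L)%nat with m by lia. replace (k * 1)%nat with k by lia. exact Hm.
  - assert (Hj1 : (1 <= j)%nat) by lia. specialize (IHj Hj1).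
    destruct (merge (Z.of_nat (k * j)) (Z.of_nat k) HL) as [w [Hw E]].
    replace (CPK (Z.of_nat (k * S j)) L) with (CPK (Z.of_nat (k * j) + Z.of_nat k) L)
      by (apply CPK_ext; lia).
    replace (CPK (Z.of_nat (k * j) + Z.of_nat k) L) with (CPK (Z.of_nat (k * j)) L ** CPK (Z.of_nat k) L ** inv w)
      by (rewrite E, <- mA, mVr, m1r; auto).
    eapply pc_mono. apply pc_mul. apply pc_mul. apply IHj. apply Hm. apply pc_inv. apply Hw.
    nia.
Qed.

Definition Pcost (c : V T) (r : R) : Prop :=
  exists L k m, (1 <= k)%nat /\ allN L /\ chain L = c /\ pc (CPK (Z.of_nat k) L) m /\
    (INR m + INR (length L)) / INR k <= r.

Lemma Pcost_nn c r : Pcost c r -> 0 <= r.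
Proof.
  intros [L [k [m [Hk [_ [_ [_ Hr]]]]]]]. eapply Rle_trans; [|exact Hr].
  apply Rdiv_le_0_compat. pose proof (pos_INR m). pose proof (pos_INR (length L)). lra.
  apply lt_0_INR; lia.
Qed.

Lemma Pcost0 : Pcost (@vzero T) 0.
Proof.
  exists nil, 1%nat, 0%nat. split. lia. split. intros x []. split. auto. split. apply pc_e.
  simpl. lra.
Qed.

Lemma Pcost_add a b r s : Pcost a r -> Pcost b s -> Pcost (vadd a b) (r + s).
Proof.
  intros [L1 [k1 [m1 [Hk1 [HL1 [Hc1 [Hm1 Hr1]]]]]]] [L2 [k2 [m2 [Hk2 [HL2 [Hc2 [Hm2 Hr2]]]]]]].
  exists (L1 ++ L2), (k1 * k2)%nat, (k2 * m1 + (k2 - 1) * length L1 + (k1 * m2 + (k1 - 1) * length L2))%nat.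
  split. nia. split. intros x Hx. apply in_app_iff in Hx. destruct Hx; [apply HL1|apply HL2]; auto.
  split. rewrite chain_app, Hc1, Hc2. auto.
  split. rewrite CPK_app. apply pc_mul.
  - apply regroup; auto.
  - rewrite Nat.mul_comm. apply regroup; auto.
  - rewrite app_length.
    assert (E : (INR (k2 * m1 + (k2 - 1) * length L1 + (k1 * m2 + (k1 - 1) * length L2)) +
                 INR (length L1 + length L2)) = INR k2 * (INR m1 + INR (length L1)) + INR k1 * (INR m2 + INR (length L2))).
    { rewrite <- !plus_INR, <- !mult_INR, <- !plus_INR. f_equal. nia. }
    rewrite E, mult_INR.
    assert (0 < INR k1) by (apply lt_0_INR; lia). assert (0 < INR k2) by (apply lt_0_INR; lia).
    replace ((INR k2 * (INR m1 + INR (length L1)) + INR k1 * (INR m2 + INR (length L2))) / (INR k1 * INR k2))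
      with ((INR m1 + INR (length L1)) / INR k1 + (INR m2 + INR (length L2)) / INR k2) by (field; lra).
    lra.
Qed.

Definition negE (x : entry) : entry := (fst (fst x), (- snd (fst x))%Z, snd x).

Lemma Pcost_opp a r : Pcost a r -> exists s, Pcost (vopp a) s.
Proof.
  intros [L [k [m [Hk [HL [Hc [Hm Hr]]]]]]].
  exists ((INR m + INR (length L)) / INR k). exists (rev (map negE L)), k, m.
  split; auto. split.
  { intros x Hx. apply in_rev in Hx. apply in_map_iff in Hx. destruct Hx as [y [<- Hy]]. exact (HL y Hy). }
  split.
  { rewrite <- Hc. clear Hc Hm Hr HL. induction L as [|x L IH]; simpl.
    - apply vext; intro; unfold vopp, vzero; lia.
    - rewrite chain_app, IH. apply vext; intro y. unfold chain; simpl. unfold vadd, vopp, vscal, vzero. lia. }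
  split.
  { assert (E : CPK (Z.of_nat k) (rev (map negE L)) = inv (CPK (Z.of_nat k) L)).
    { clear Hc Hm Hr HL. induction L as [|x L IH]; simpl. rewrite inv1; auto.
      rewrite CPK_app, IH, invM. simpl. rewrite m1r. f_equal.
      unfold item, negE. simpl. rewrite <- cj_inv. f_equal. f_equal.
      rewrite <- zpN. f_equal. lia. }
    rewrite E. apply pc_inv; auto. }
  rewrite rev_length, map_length. lra.
Qed.

Definition notz (z : T) (x : entry) : bool :=
  if excluded_middle_informative (fst (fst x) = z) then false else true.

Lemma chain_filter z L y : chain (filter (notz z) L) y = if excluded_middle_informative (y = z) then 0%Z else chain L y.
Proof.
  induction L as [|x L IH].
  - unfold chain, vzero; simpl. destruct (excluded_middle_informative (y = z)); auto.
  - change (filter (notz z) (x :: L)) with (if notz z x then x :: filter (notz z) L else filter (notz z) L).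
    unfold notz at 1. destruct (excluded_middle_informative (fst (fst x) = z)) as [Hx|Hx].
    + rewrite IH, chain_cons. destruct (excluded_middle_informative (y = z)) as [Hy|Hy]; auto.
      rewrite dlt_neq by congruence. lia.
    + rewrite !chain_cons, IH. destruct (excluded_middle_informative (y = z)) as [Hy|Hy]; auto.
      subst. rewrite dlt_neq by auto. lia.
Qed.

Lemma filt_eq z a u L : filter (notz z) ((z, a, u) :: L) = filter (notz z) L.
Proof. simpl. unfold notz at 1. simpl. destruct (excluded_middle_informative (z = z)); auto. tauto. Qed.
Lemma filt_neq z g a u L : g <> z -> filter (notz z) ((g, a, u) :: L) = (g, a, u) :: filter (notz z) L.
Proof. intro H. simpl. unfold notz at 1. simpl. destruct (excluded_middle_informative (g = z)); auto. tauto. Qed.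

Lemma extract K z L : N z -> allN L -> exists t' L2 w c1,
  map fst L2 = map fst (filter (notz z) L) /\ (c1 + length L2 = length L)%nat /\ pc w c1 /\
  CPK K L = t' ** zp z (K * chain L z) ** inv t' ** CPK K L2 ** w.
Proof.
  intros Hz. induction L as [|x L IH]; intro HL.
  - exists e, nil, e, 0%nat. simpl. split; auto. split; auto. split. apply pc_e.
    unfold CPK; simpl fold_right. change (chain nil z) with 0%Z. rewrite Z.mul_0_r. simpl zp. rewrite inv1, !m1l. auto.
  - destruct IH as [t' [L2 [w [c1 [HL2 [Hlen [Hw E]]]]]]]. intros y Hy; apply HL; simpl; auto.
    destruct x as [[g a] u]. assert (Hg : N g) by (apply (HL (g, a, u)); simpl; auto).
    destruct (excluded_middle_informative (g = z)) as [Hgz|Hgz].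
    + subst g. set (b := zp z (K * chain L z)).
      set (R2 := CPK K L2). set (s := inv u ** t').
      assert (HbN : N b) by (apply Nzp; auto).
      set (c := cm s b).
      exists u, L2, (inv R2 ** (u ** inv b ** c ** b ** inv u) ** R2 ** w), (S c1).
      split. rewrite filt_eq; auto. split. simpl; lia. split.
      * replace (S c1) with (1 + c1)%nat by lia. apply pc_mul; auto.
        replace (inv R2 ** (u ** inv b ** c ** b ** inv u) ** R2) with
          (inv R2 ** (u ** inv b ** c ** inv (u ** inv b)) ** inv (inv R2))
          by (rewrite invK, invM, invK; rewrite <- !mA; auto).
        apply pc_conj. apply pc_conj. apply pc_cm; auto.
      * change (CPK K ((z, a, u) :: L)) with (item K (z, a, u) ** CPK K L).
        rewrite E. fold b R2. rewrite chain_cons. cbn [fst snd]. rewrite dlt_eq.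
        replace (K * (a * 1 + chain L z))%Z with (K * a + K * chain L z)%Z by lia.
        rewrite zpD. fold b. unfold item. cbn [fst snd]. unfold c, s, comm. rewrite !invM, !invK.
        rewrite <- !mA. repeat first [rewrite mKVl | rewrite mKl]. reflexivity.
    + set (q := item K (g, a, u)).
      exists (q ** t'), ((g, a, u) :: L2), w, c1.
      split. rewrite filt_neq by auto. simpl. f_equal. auto. split. simpl. lia. split; auto.
      change (CPK K ((g, a, u) :: L)) with (q ** CPK K L).
      change (CPK K ((g, a, u) :: L2)) with (q ** CPK K L2).
      rewrite E. rewrite chain_cons. cbn [fst snd]. rewrite dlt_neq by congruence.
      replace (a * 0 + chain L z)%Z with (chain L z) by lia.
      rewrite invM. rewrite <- !mA. rewrite mKl. reflexivity.
Qed.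

Lemma group_zero K n : forall L, (length L <= n)%nat -> allN L -> chain L = (@vzero T) -> pc (CPK K L) (length L).
Proof.
  induction n; intros L Hlen HL Hc.
  - destruct L; simpl in *; try lia. apply pc_e.
  - destruct L as [|x L'] eqn:EL. apply pc_e.
    rewrite <- EL in *.
    assert (Hx : N (fst (fst x))) by (apply HL; rewrite EL; simpl; auto).
    destruct (extract K Hx HL) as [t' [L2 [w [c1 [HL2 [Hlen2 [Hw E]]]]]]].
    assert (Hl2 : (length L2 < length L)%nat).
    { assert (length L2 = length (filter (notz (fst (fst x))) L)) by (rewrite <- (map_length fst), HL2, map_length; auto).
      rewrite H, EL. simpl. unfold notz at 1.
      destruct (excluded_middle_informative (fst (fst x) = fst (fst x))); [|tauto].
      pose proof (filter_length_le (notz (fst (fst x))) L'). lia. }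
    assert (HN2 : allN L2).
    { apply allN_strip with (filter (notz (fst (fst x))) L); auto.
      intros y Hy. apply filter_In in Hy. apply HL. tauto. }
    assert (Hc2 : chain L2 = (@vzero T)).
    { rewrite (chain_strip HL2). apply vext. intro y. rewrite chain_filter.
      destruct (excluded_middle_informative (y = fst (fst x))); auto. rewrite Hc. auto. }
    assert (Hl3 : (length L2 <= n)%nat). { clear - Hl2 Hlen. lia. } specialize (IHn L2 Hl3 HN2 Hc2).
    rewrite E, Hc. unfold vzero. rewrite Z.mul_0_r. simpl.
    rewrite m1r, mVr, m1l. rewrite <- Hlen2, Nat.add_comm. apply pc_mul; auto.
Qed.

Lemma key_lower n z r : (1 <= n)%nat -> inGN z -> Pcost (vscal (Z.of_nat n) (dlt z)) r ->
  INR n * scl z <= r.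
Proof.
  intros Hn Hz [L [k [m [Hk [HL [Hc [Hm Hr]]]]]]].
  assert (HzN : N z) by (apply (inGN_N HG HN); auto).
  destruct (extract (Z.of_nat k) HzN HL) as [t' [L2 [w [c1 [HL2 [Hlen2 [Hw E]]]]]]].
  assert (HN2 : allN L2).
  { apply allN_strip with (filter (notz z) L); auto. intros y Hy. apply filter_In in Hy. apply HL. tauto. }
  assert (Hc2 : chain L2 = (@vzero T)).
  { rewrite (chain_strip HL2). apply vext. intro y. rewrite chain_filter.
    destruct (excluded_middle_informative (y = z)); auto. rewrite Hc. unfold vscal, vzero.
    rewrite dlt_neq; auto. lia. }
  pose proof (group_zero (Z.of_nat k) (le_n (length L2)) HN2 Hc2) as HG2.
  rewrite Hc in E. unfold vscal in E. rewrite dlt_eq, Z.mul_1_r in E.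
  replace (Z.of_nat k * Z.of_nat n)%Z with (Z.of_nat (k * n)) in E by lia.
  rewrite zp_nat in E.
  assert (Hp : pc (gp z (k * n)) (m + length L)).
  { assert (E2 : gp z (k * n) = inv t' ** (CPK (Z.of_nat k) L ** inv w ** inv (CPK (Z.of_nat k) L2)) ** inv (inv t')).
    { rewrite E, invK. rewrite <- !mA. repeat first [rewrite mKVl | rewrite mKl]. rewrite mVl, m1r. reflexivity. }
    rewrite E2. apply pc_conj. rewrite <- Hlen2. replace (m + (c1 + length L2))%nat with (m + c1 + length L2)%nat by lia.
    apply pc_mul. apply pc_mul; auto. apply pc_inv; auto. apply pc_inv; auto. }
  pose proof (scl_le HG HN Hz (ltac:(nia) : (1 <= k * n)%nat) Hp).
  assert (0 < INR k) by (apply lt_0_INR; lia). assert (0 < INR n) by (apply lt_0_INR; lia).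
  rewrite mult_INR, plus_INR in H.
  eapply Rle_trans; [|exact Hr].
  apply Rmult_le_reg_r with (INR k); auto.
  replace ((INR m + INR (length L)) / INR k * INR k) with (INR m + INR (length L)) by (field; lra).
  apply Rmult_le_compat_r with (r := INR k * INR n) in H; [|nra].
  replace ((INR m + INR (length L)) / (INR k * INR n) * (INR k * INR n)) with (INR m + INR (length L)) in H by (field; lra).
  nra.
Qed.

End Chains.

End G5.
Import G5.

Module G6.
Local Open Scope R_scope.
Set Implicit Arguments.
Unset Strict Implicit.

Lemma le_of_arch (a b C : R) : (forall k : nat, (1 <= k)%nat -> a <= b + C / INR k) -> a <= b.
Proof.
  intro H. destruct (Rle_or_lt a b) as [h|h]; auto.
  assert (Hp : 0 < a - b) by lra.
  destruct (INR_archimed (a - b) (Rabs C) Hp) as [n Hn].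
  assert (Hn1 : (1 <= S n)%nat) by lia. specialize (H (S n) Hn1).
  rewrite S_INR in H. assert (0 <= INR n) by apply pos_INR.
  assert (C / (INR n + 1) < a - b).
  { apply Rmult_lt_reg_r with (INR n + 1). lra. unfold Rdiv. rewrite Rmult_assoc, Rinv_l by lra.
    rewrite Rmult_1_r. pose proof (Rle_abs C). nra. }
  lra.
Qed.

Section Bav.
Context {T : Type} {mul : T -> T -> T} {inv : T -> T} {e : T}.
Context (HG : is_group mul inv e).
Context {N : T -> Prop}.
Context (HN : is_normal_subgroup mul inv e N).
Local Infix "**" := mul (at level 40, left associativity).
Local Notation gp := (gpow mul e).
Local Notation zp := (zp mul inv e).
Local Notation pc := (prod_comm mul inv e N).
Local Notation inGN := (in_GN mul inv e N).
Local Notation scl := (scl mul inv e N).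
Local Notation Pcost := (@Pcost T mul inv e N).
Local Notation CPK := (@CPK T mul inv e).
Local Notation item := (@item T mul inv e).

Lemma item_e K g a : item K (g, a, e) = zp g (K * a).
Proof. unfold item. simpl. rewrite (m1l HG), (inv1 HG), (m1r HG). auto. Qed.

Lemma item_conj K g x : item K (g ** x ** inv g, 1%Z, inv g) = zp x K.
Proof.
  unfold item. simpl. rewrite (zp_conj HG), (invK HG), Z.mul_1_r.
  rewrite <- !(mA HG). rewrite (mKl HG). rewrite (mA HG), (mKVr HG). auto.
Qed.
Lemma item_conjN K g x : item K (g ** x ** inv g, (-1)%Z, inv g) = zp x (- K).
Proof.
  unfold item. simpl. rewrite (zp_conj HG), (invK HG). replace (K * -1)%Z with (- K)%Z by lia.
  rewrite <- !(mA HG). rewrite (mKl HG). rewrite (mA HG), (mKVr HG). auto.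
Qed.

Lemma cost_lim (c : V T) (F : V T -> R) (b C : R) :
  (forall a r, Pcost a r -> F a <= r) -> (forall k : nat, (1 <= k)%nat -> Pcost c (b + C / INR k)) -> F c <= b.
Proof. intros HF H. apply le_of_arch with C. intros k Hk. apply HF. apply H; auto. Qed.

Lemma mk_cost (c : V T) L k m r : (1 <= k)%nat -> @allN T N L -> chain L = c -> pc (CPK (Z.of_nat k) L) m ->
  (INR m + INR (length L)) / INR k <= r -> Pcost c r.
Proof. intros. exists L, k, m. auto. Qed.

Lemma bavard z : inGN z -> exists phi : T -> R, qmD mul inv e N 1 phi /\ scl z <= phi z.
Proof.
  intro Hz. assert (HzN : N z) by (apply (inGN_N HG HN); auto).
  assert (Hv0 : exists r, Pcost (dlt z) r).
  { exists ((INR (cl mul inv e N z) + INR 1) / INR 1). apply mk_cost with ((z, 1%Z, e) :: nil) 1%nat (cl mul inv e N z); auto.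
    - intros x [<-|[]]. simpl. auto.
    - apply vext; intro y. unfold chain. simpl. unfold vadd, vscal, vzero. lia.
    - change (CPK (Z.of_nat 1) ((z, 1%Z, e) :: nil)) with (item 1%Z (z, 1%Z, e) ** e).
      rewrite item_e, (m1r HG). simpl. rewrite (m1r HG). apply (cl_pc HG HN); auto.
    - right; reflexivity. }
  destruct (@HB_main T Pcost (Pcost0 HG HN) (fun r => @Pcost_nn T mul inv e N (@vzero T) r) (Pcost_add HG HN)
              (Pcost_opp HG HN) (dlt z) (scl z) Hv0) as [F [Fadd [Fdom Fz]]].
  { intros n r Hn Hr. apply (key_lower HG HN Hn Hz Hr). }
  assert (F0 : F (@vzero T) = 0).
  { pose proof (Fadd (@vzero T) (@vzero T)).
    replace (vadd (@vzero T) (@vzero T)) with (@vzero T) in H by (apply vext; intro; unfold vadd, vzero; lia). lra. }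
  assert (Fopp : forall a, F (vopp a) = - F a).
  { intro a. pose proof (Fadd a (vopp a)).
    replace (vadd a (vopp a)) with (@vzero T) in H by (apply vext; intro; unfold vadd, vopp, vzero; lia). lra. }
  assert (Fscal : forall a n, F (vscal (Z.of_nat n) a) = INR n * F a).
  { intros a n. induction n.
    - replace (vscal (Z.of_nat 0) a) with (@vzero T) by (apply vext; intro; unfold vscal, vzero; lia).
      rewrite F0. simpl. ring.
    - replace (vscal (Z.of_nat (S n)) a) with (vadd (vscal (Z.of_nat n) a) a)
        by (apply vext; intro; unfold vscal, vadd; lia).
      rewrite Fadd, IHn, S_INR. ring. }
  set (phi := fun x => F (dlt x)).
  exists phi. split; [|auto].
  split; [|split].
  -
    intros x n Hx. unfold phi.
    assert (H1 : F (vadd (dlt (gp x n)) (vopp (vscal (Z.of_nat n) (dlt x)))) <= 0).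
    { apply cost_lim with 2; auto. intros k Hk. rewrite Rplus_0_l.
      apply mk_cost with ((gp x n, 1%Z, e) :: (x, (- Z.of_nat n)%Z, e) :: nil) k 0%nat; auto.
      - intros y [<-|[<-|[]]]; simpl. apply (Ngp HG HN); auto. auto.
      - apply vext; intro y. unfold chain. simpl. unfold vadd, vscal, vzero, vopp. lia.
      - change (pc (item (Z.of_nat k) (gp x n, 1%Z, e) ** (item (Z.of_nat k) (x, (- Z.of_nat n)%Z, e) ** e)) 0).
        rewrite !item_e, (m1r HG), (zp_gp HG). rewrite <- (zpD HG).
        replace (Z.of_nat n * (Z.of_nat k * 1) + Z.of_nat k * - Z.of_nat n)%Z with 0%Z by lia.
        simpl. auto.
      - simpl. lra. }
    assert (H2 : F (vadd (vscal (Z.of_nat n) (dlt x)) (vopp (dlt (gp x n)))) <= 0).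
    { apply cost_lim with 2; auto. intros k Hk. rewrite Rplus_0_l.
      apply mk_cost with ((x, Z.of_nat n, e) :: (gp x n, (-1)%Z, e) :: nil) k 0%nat; auto.
      - intros y [<-|[<-|[]]]; simpl. auto. apply (Ngp HG HN); auto.
      - apply vext; intro y. unfold chain. simpl. unfold vadd, vscal, vzero, vopp. lia.
      - change (pc (item (Z.of_nat k) (x, Z.of_nat n, e) ** (item (Z.of_nat k) (gp x n, (-1)%Z, e) ** e)) 0).
        rewrite !item_e, (m1r HG), (zp_gp HG). rewrite <- (zpD HG).
        replace (Z.of_nat k * Z.of_nat n + Z.of_nat n * (Z.of_nat k * -1))%Z with 0%Z by lia.
        simpl. auto.
      - simpl. lra. }
    rewrite !Fadd, !Fopp, Fscal in H1, H2. lra.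
  -
    intros x y Hx Hy. unfold phi.
    assert (Hxy : N (x ** y)) by (apply (NM HG HN); auto).
    assert (H1 : F (vadd (vadd (dlt x) (dlt y)) (vopp (dlt (x ** y)))) <= 1).
    { apply cost_lim with 3; auto. intros k Hk.
      apply mk_cost with ((x, 1%Z, e) :: (y, 1%Z, e) :: (x ** y, (-1)%Z, e) :: nil) k k; auto.
      - intros w [<-|[<-|[<-|[]]]]; simpl; auto.
      - apply vext; intro w. unfold chain. simpl. unfold vadd, vscal, vzero, vopp. lia.
      - change (pc (item (Z.of_nat k) (x, 1%Z, e) ** (item (Z.of_nat k) (y, 1%Z, e) **
                   (item (Z.of_nat k) (x ** y, (-1)%Z, e) ** e))) k).
        rewrite !item_e, (m1r HG), !Z.mul_1_r. replace (Z.of_nat k * -1)%Z with (- Z.of_nat k)%Z by lia.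
        rewrite (zpN HG), !zp_nat, (mA HG). apply (pc_Ak HG HN); auto.
      - assert (0 < INR k) by (apply lt_0_INR; lia). simpl length.
        replace (INR 3) with 3 by (simpl; ring). right. field. lra. }
    assert (H2 : F (vadd (dlt (x ** y)) (vopp (vadd (dlt x) (dlt y)))) <= 1).
    { apply cost_lim with 3; auto. intros k Hk.
      apply mk_cost with ((x ** y, 1%Z, e) :: (y, (-1)%Z, e) :: (x, (-1)%Z, e) :: nil) k k; auto.
      - intros w [<-|[<-|[<-|[]]]]; simpl; auto.
      - apply vext; intro w. unfold chain. simpl. unfold vadd, vscal, vzero, vopp. lia.
      - change (pc (item (Z.of_nat k) (x ** y, 1%Z, e) ** (item (Z.of_nat k) (y, (-1)%Z, e) **
                   (item (Z.of_nat k) (x, (-1)%Z, e) ** e))) k).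
        rewrite !item_e, (m1r HG), !Z.mul_1_r. replace (Z.of_nat k * -1)%Z with (- Z.of_nat k)%Z by lia.
        rewrite !(zpN HG), !zp_nat.
        replace (gp (x ** y) k ** (inv (gp y k) ** inv (gp x k))) with
          (inv (gp x k ** gp y k ** inv (gp (x ** y) k))) by (rewrite !(invM HG), (invK HG), (mA HG); auto).
        apply (pc_inv HG HN). apply (pc_Ak HG HN); auto.
      - assert (0 < INR k) by (apply lt_0_INR; lia). simpl length.
        replace (INR 3) with 3 by (simpl; ring). right. field. lra. }
    rewrite ?Fadd, ?Fopp, ?Fadd in H1. rewrite ?Fadd, ?Fopp, ?Fadd in H2.
    apply Rabs_le. lra.
  -
    intros g x Hx. unfold phi.
    assert (Hgx : N (g ** x ** inv g)) by (apply (NJ HG HN); auto).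
    assert (H1 : F (vadd (dlt (g ** x ** inv g)) (vopp (dlt x))) <= 0).
    { apply cost_lim with 2; auto. intros k Hk. rewrite Rplus_0_l.
      apply mk_cost with ((g ** x ** inv g, 1%Z, inv g) :: (x, (-1)%Z, e) :: nil) k 0%nat; auto.
      - intros w [<-|[<-|[]]]; simpl; auto.
      - apply vext; intro w. unfold chain. simpl. unfold vadd, vscal, vzero, vopp. lia.
      - change (pc (item (Z.of_nat k) (g ** x ** inv g, 1%Z, inv g) ** (item (Z.of_nat k) (x, (-1)%Z, e) ** e)) 0).
        rewrite item_conj, item_e, (m1r HG), <- (zpD HG).
        replace (Z.of_nat k + Z.of_nat k * -1)%Z with 0%Z by lia. simpl. auto.
      - simpl. lra. }
    assert (H2 : F (vadd (dlt x) (vopp (dlt (g ** x ** inv g)))) <= 0).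
    { apply cost_lim with 2; auto. intros k Hk. rewrite Rplus_0_l.
      apply mk_cost with ((x, 1%Z, e) :: (g ** x ** inv g, (-1)%Z, inv g) :: nil) k 0%nat; auto.
      - intros w [<-|[<-|[]]]; simpl; auto.
      - apply vext; intro w. unfold chain. simpl. unfold vadd, vscal, vzero, vopp. lia.
      - change (pc (item (Z.of_nat k) (x, 1%Z, e) ** (item (Z.of_nat k) (g ** x ** inv g, (-1)%Z, inv g) ** e)) 0).
        rewrite item_conjN, item_e, (m1r HG), <- (zpD HG).
        replace (Z.of_nat k * 1 + - Z.of_nat k)%Z with 0%Z by lia. simpl. auto.
      - simpl. lra. }
    rewrite !Fadd, !Fopp in H1, H2. lra.
Qed.

End Bav.

End G6.
Import G6.

Module G7.
Local Open Scope R_scope.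
Set Implicit Arguments.
Unset Strict Implicit.

Lemma rsum_ext f g n : (forall i, (i < n)%nat -> f i = g i) -> rsum f n = rsum g n.
Proof. induction n; intro H; simpl; auto. rewrite IHn, H; auto. Qed.
Lemma rsum_plus f g n : rsum (fun i => f i + g i) n = rsum f n + rsum g n.
Proof. induction n; simpl. ring. rewrite IHn. ring. Qed.
Lemma rsum_scal a f n : rsum (fun i => a * f i) n = a * rsum f n.
Proof. induction n; simpl. ring. rewrite IHn. ring. Qed.
Lemma rsum_split f n k : (k < n)%nat -> rsum f n = rsum (fun i => if Nat.eqb i k then 0 else f i) n + f k.
Proof.
  induction n; intro Hk. lia. simpl.
  destruct (Nat.eq_dec k n) as [->|Hne].
  - rewrite Nat.eqb_refl.
    assert (E : rsum (fun i => if Nat.eqb i n then 0 else f i) n = rsum f n).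
    { apply rsum_ext. intros i Hi. destruct (Nat.eqb_spec i n); [lia|auto]. }
    rewrite E. ring.
  - rewrite IHn by lia. destruct (Nat.eqb_spec n k). lia. ring.
Qed.
Lemma rsum_zero n : rsum (fun _ => 0) n = 0.
Proof. induction n; simpl; auto. rewrite IHn. ring. Qed.
Lemma rsum_delta f n k : (k < n)%nat -> rsum (fun i => (if Nat.eqb i k then 1 else 0) * f i) n = f k.
Proof.
  intro Hk. rewrite (rsum_split _ Hk). rewrite Nat.eqb_refl.
  rewrite (rsum_ext (g := fun _ => 0)). rewrite rsum_zero. ring.
  intros i Hi. destruct (Nat.eqb i k); ring.
Qed.

Section Elim.
Context {T : Type} {mul : T -> T -> T} {inv : T -> T} {e : T}.
Context (HG : is_group mul inv e).
Context {N : T -> Prop}.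
Context (HN : is_normal_subgroup mul inv e N).
Local Infix "**" := mul (at level 40, left associativity).
Local Notation inGN := (in_GN mul inv e N).
Local Notation Qi := (is_Q_inv mul inv e N).
Local Notation H1i := (is_H1_inv mul inv N).

Lemma Q_lin f g b : Qi f -> Qi g -> Qi (fun x => f x + b * g x).
Proof.
  intros Hf Hg. destruct (QinvD HG HN Hf) as [D1 [A1 [B1 C1]]]. destruct (QinvD HG HN Hg) as [D2 [A2 [B2 C2]]].
  apply (qmD_Q HG HN (D := D1 + Rabs b * D2)). split; [|split].
  - intros x n Hx. rewrite A1, A2 by auto. ring.
  - intros x1 x2 H1 H2. specialize (B1 x1 x2 H1 H2). specialize (B2 x1 x2 H1 H2).
    replace (f (x1 ** x2) + b * g (x1 ** x2) - (f x1 + b * g x1) - (f x2 + b * g x2))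
      with ((f (x1 ** x2) - f x1 - f x2) + b * (g (x1 ** x2) - g x1 - g x2)) by ring.
    eapply Rle_trans. apply Rabs_triang. rewrite Rabs_mult.
    pose proof (Rabs_pos b). nra.
  - intros g0 x Hx. rewrite C1, C2 by auto. auto.
Qed.
Lemma Q_scale f b : Qi f -> Qi (fun x => b * f x).
Proof.
  intro Hf. destruct (QinvD HG HN Hf) as [D1 [A1 [B1 C1]]].
  apply (qmD_Q HG HN (D := Rabs b * D1)). split; [|split].
  - intros x n Hx. rewrite A1 by auto. ring.
  - intros x1 x2 H1 H2. specialize (B1 x1 x2 H1 H2).
    replace (b * f (x1 ** x2) - b * f x1 - b * f x2) with (b * (f (x1 ** x2) - f x1 - f x2)) by ring.
    rewrite Rabs_mult. pose proof (Rabs_pos b). nra.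
  - intros g0 x Hx. rewrite C1 by auto. auto.
Qed.
Lemma Q_H1 f : Qi f -> (forall z, inGN z -> f z = 0) -> H1i f.
Proof.
  intros Hf Hv. destruct (QinvD HG HN Hf) as [D Hq]. split.
  - intros x y Hx Hy. apply (hom_of_vanish HG HN Hq Hv); auto.
  - apply Hq.
Qed.

Definition dl (i j : nat) : R := if Nat.eqb i j then 1 else 0.

Definition Inv (l k : nat) (F : nat -> T -> R) (z : nat -> T) : Prop :=
  (forall i, (i < l)%nat -> Qi (F i)) /\
  (forall i j, (i < l)%nat -> (j < k)%nat -> F i (z j) = dl i j) /\
  (forall j, (j < k)%nat -> inGN (z j)) /\
  (forall phi, Qi phi -> exists (c : nat -> R) h, H1i h /\ forall x, N x -> phi x = rsum (fun i => c i * F i x) l + h x) /\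
  (forall c : nat -> R, (exists h, H1i h /\ forall x, N x -> h x = rsum (fun i => c i * F i x) l) ->
     forall i, (i < l)%nat -> c i = 0).

Lemma Inv_step l k F z : (k < l)%nat -> Inv l k F z -> exists F' z', Inv l (S k) F' z'.
Proof.
  intros Hk [I1 [I2 [I3 [I4 I5]]]].
  assert (Hex : exists zk, inGN zk /\ F k zk <> 0).
  { apply NNPP. intro Hno.
    assert (Hh : H1i (F k)).
    { apply Q_H1. apply I1; auto. intros w Hw. apply NNPP. intro Hne. apply Hno. exists w; auto. }
    assert (H0 := I5 (fun i => dl i k)). specialize (H0 (ex_intro _ (F k) (conj Hh (fun x _ => eq_sym (rsum_delta (fun i => F i x) Hk)))) k Hk).
    unfold dl in H0. rewrite Nat.eqb_refl in H0. lra. }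
  destruct Hex as [zk [Hzk Ha]]. set (a := F k zk).
  set (F' := fun i => if Nat.eqb i k then (fun x => F k x / a) else (fun x => F i x + (- (F i zk / a)) * F k x)).
  set (z' := fun j => if Nat.eqb j k then zk else z j).
  set (Tc := fun c : nat -> R => fun i => if Nat.eqb i k then
               (c k - rsum (fun j => if Nat.eqb j k then 0 else c j * F j zk) l) / a else c i).
  assert (Hcoord : forall c x, rsum (fun i => c i * F' i x) l = rsum (fun i => Tc c i * F i x) l).
  { intros c x. rewrite (rsum_split (fun i => c i * F' i x) Hk). rewrite (rsum_split (fun i => Tc c i * F i x) Hk).
    unfold F', Tc. rewrite !Nat.eqb_refl.
    rewrite (rsum_ext (f := fun i => if Nat.eqb i k then 0 else c i * (if Nat.eqb i k then fun x0 => F k x0 / a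
                   else fun x0 => F i x0 + - (F i zk / a) * F k x0) x)
                     (g := fun i => (if Nat.eqb i k then 0 else c i * F i x) + (- (F k x / a)) * (if Nat.eqb i k then 0 else c i * F i zk))).
    2:{ intros i Hi. destruct (Nat.eqb i k); field; auto. }
    rewrite rsum_plus, rsum_scal.
    rewrite (rsum_ext (f := fun i => if Nat.eqb i k then 0 else (if Nat.eqb i k then (c k - rsum (fun j => if Nat.eqb j k then 0 else c j * F j zk) l) / a else c i) * F i x)
                     (g := fun i => if Nat.eqb i k then 0 else c i * F i x)).
    2:{ intros i Hi. destruct (Nat.eqb i k); auto. }
    field. auto. }
  exists F', z'. split; [|split; [|split; [|split]]].
  - intros i Hi. unfold F'. destruct (Nat.eqb i k).
    + replace (fun x => F k x / a) with (fun x => / a * F k x) by (apply functional_extensionality; intro; unfold Rdiv; ring).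
      apply Q_scale. apply I1; auto.
    + apply Q_lin; apply I1; auto.
  - intros i j Hi Hj. unfold F', z', dl.
    destruct (Nat.eqb_spec j k) as [->|Hjk].
    + destruct (Nat.eqb_spec i k) as [->|Hik].
      * fold a. field. auto.
      * fold a. destruct (Nat.eqb_spec i k); [lia|]. field. auto.
    + assert (Hj' : (j < k)%nat) by lia.
      destruct (Nat.eqb_spec i k) as [->|Hik]; cbv beta.
      * rewrite (I2 k j Hk Hj'). unfold dl. destruct (Nat.eqb_spec k j); [lia|]. unfold Rdiv. ring.
      * rewrite (I2 i j Hi Hj'), (I2 k j Hk Hj'). unfold dl. destruct (Nat.eqb_spec k j); [lia|]. ring.
  - intros j Hj. unfold z'. destruct (Nat.eqb_spec j k); auto. apply I3; lia.
  - intros phi Hphi. destruct (I4 phi Hphi) as [c [h [Hh Hc]]].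
    set (c' := fun i => if Nat.eqb i k then a * c k + rsum (fun j => if Nat.eqb j k then 0 else c j * F j zk) l else c i).
    exists c', h. split; auto. intros x Hx. rewrite Hc by auto. f_equal. rewrite Hcoord.
    apply rsum_ext. intros i Hi. f_equal. unfold Tc, c'. destruct (Nat.eqb_spec i k) as [->|Hik].
    + rewrite Nat.eqb_refl.
      rewrite (rsum_ext (f := fun j => if Nat.eqb j k then 0 else (if Nat.eqb j k then a * c k + rsum (fun j0 => if Nat.eqb j0 k then 0 else c j0 * F j0 zk) l else c j) * F j zk)
                       (g := fun j => if Nat.eqb j k then 0 else c j * F j zk)).
      field. auto. intros j Hj. destruct (Nat.eqb j k); auto.
    + auto.
  - intros c [h [Hh Hc]] i Hi.
    assert (HT : forall i, (i < l)%nat -> Tc c i = 0).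
    { apply I5. exists h. split; auto. intros x Hx. rewrite Hc by auto. apply Hcoord. }
    assert (Hoff : forall j, (j < l)%nat -> j <> k -> c j = 0).
    { intros j Hj Hjk. pose proof (HT j Hj). unfold Tc in H. destruct (Nat.eqb_spec j k); [lia|]. auto. }
    destruct (Nat.eqb_spec i k) as [->|Hik]; [|apply Hoff; auto].
    pose proof (HT k Hk). unfold Tc in H. rewrite Nat.eqb_refl in H.
    rewrite (rsum_ext (g := fun _ => 0)) in H. rewrite rsum_zero in H.
    2:{ intros j Hj. destruct (Nat.eqb_spec j k). auto. rewrite Hoff; auto. ring. }
    assert (E : c k = (c k - 0) / a * a) by (field; auto). rewrite H in E. lra.
Qed.

Lemma dual_basis l : quot_dim_eq mul inv e N l -> exists (F : nat -> T -> R) (z : nat -> T), Inv l l F z.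
Proof.
  intros [psi [Q1 [Q2 Q3]]].
  assert (H : forall k, (k <= l)%nat -> exists F z, Inv l k F z).
  { induction k; intro Hk.
    - exists psi, (fun _ => e). split; [|split; [|split; [|split]]]; auto; intros; lia.
    - destruct (IHk ltac:(lia)) as [F [z HI]]. eapply (Inv_step (k := k)); eauto. }
  apply H. lia.
Qed.

End Elim.

End G7.
Import G7.

Module G8a.
Local Open Scope R_scope.
Set Implicit Arguments.
Unset Strict Implicit.

Lemma rsum_le f g n : (forall i, (i < n)%nat -> f i <= g i) -> rsum f n <= rsum g n.
Proof. induction n; intro H; simpl. lra. pose proof (H n ltac:(lia)). pose proof (IHn (fun i Hi => H i ltac:(lia))). lra. Qed.
Lemma rsum_const c n : rsum (fun _ => c) n = INR n * c.
Proof. induction n; simpl. ring. rewrite IHn. destruct n; simpl; ring. Qed.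
Lemma rsum_nonneg f n : (forall i, (i < n)%nat -> 0 <= f i) -> 0 <= rsum f n.
Proof. intro H. rewrite <- (rsum_zero n). apply rsum_le. auto. Qed.
Lemma rsum_abs f n : Rabs (rsum f n) <= rsum (fun i => Rabs (f i)) n.
Proof.
  induction n; simpl. rewrite Rabs_R0; lra.
  eapply Rle_trans. apply Rabs_triang. lra.
Qed.
Lemma rsum_minus f g n : rsum (fun i => f i - g i) n = rsum f n - rsum g n.
Proof. induction n; simpl. ring. rewrite IHn. ring. Qed.
Lemma rsum_term f n k : (k < n)%nat -> (forall i, (i < n)%nat -> 0 <= f i) -> f k <= rsum f n.
Proof.
  intros Hk H. rewrite (rsum_split f Hk).
  assert (0 <= rsum (fun i => if Nat.eqb i k then 0 else f i) n).
  { apply rsum_nonneg. intros i Hi. destruct (Nat.eqb i k). lra. auto. }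
  lra.
Qed.
Lemma zsum_IZR f n : IZR (zsum f n) = rsum (fun i => IZR (f i)) n.
Proof. induction n; simpl; auto. rewrite plus_IZR, IHn. auto. Qed.

Definition rho (r : R) : Z := (up r - 1)%Z.
Lemma rho_spec r : IZR (rho r) <= r /\ r < IZR (rho r) + 1.
Proof. unfold rho. rewrite minus_IZR. destruct (archimed r). simpl. lra. Qed.
Lemma rho_close r : Rabs (IZR (rho r) - r) <= 1.
Proof. destruct (rho_spec r). apply Rabs_le. lra. Qed.

Lemma abs_diff_close a b a' b' : Rabs (a - a') <= 1 -> Rabs (b - b') <= 1 -> Rabs (Rabs (b - a) - Rabs (b' - a')) <= 2.
Proof.
  intros H1 H2. eapply Rle_trans. apply Rabs_triang_inv2.
  replace (b - a - (b' - a')) with ((b - b') - (a - a')) by ring.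
  eapply Rle_trans. apply Rabs_triang. rewrite Rabs_Ropp. lra.
Qed.

End G8a.
Import G8a.

Module G8.
Local Open Scope R_scope.
Set Implicit Arguments.
Unset Strict Implicit.

Fixpoint prodz {T : Type} (mul : T -> T -> T) (inv : T -> T) (e : T) (z : nat -> T) (v : nat -> Z) (n : nat) : T :=
  match n with O => e | S n => mul (prodz mul inv e z v n) (zp mul inv e (z n) (v n)) end.

Section Final.
Context {T : Type} {mul : T -> T -> T} {inv : T -> T} {e : T}.
Context (HG : is_group mul inv e).
Context {N : T -> Prop}.
Context (HN : is_normal_subgroup mul inv e N).
Local Infix "**" := mul (at level 40, left associativity).
Local Notation inGN := (in_GN mul inv e N).
Local Notation scl := (scl mul inv e N).
Local Notation Qi := (is_Q_inv mul inv e N).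
Local Notation H1i := (is_H1_inv mul inv N).
Local Notation zp := (zp mul inv e).

Variables (l : nat) (F : nat -> T -> R) (z : nat -> T) (D : R).
Hypothesis HD0 : 0 <= D.
Hypothesis Hq : forall i, (i < l)%nat -> qmD mul inv e N D (F i).
Hypothesis Hdl : forall i j, (i < l)%nat -> (j < l)%nat -> F i (z j) = dl i j.
Hypothesis Hz : forall j, (j < l)%nat -> inGN (z j).
Hypothesis Hspan : forall phi, Qi phi -> exists (c : nat -> R) h, H1i h /\
  forall x, N x -> phi x = rsum (fun i => c i * F i x) l + h x.

Definition Phis (u : T) : R := rsum (fun i => Rabs (F i u)) l.
Definition Dlt (x y : T) : R := rsum (fun i => Rabs (F i y - F i x)) l.
Definition Mc : R := 2 * rsum (fun j => scl (z j)) l.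

Lemma Mc_nn : 0 <= Mc.
Proof. unfold Mc. assert (0 <= rsum (fun j => scl (z j)) l); [|lra]. apply rsum_nonneg. intros. apply (scl_ge0 HG HN). auto. Qed.

Lemma E1 u : inGN u -> Phis u <= INR l * (2 * D * scl u).
Proof.
  intro Hu. unfold Phis. rewrite <- rsum_const. apply rsum_le. intros i Hi.
  apply (qm_scl HG HN (Hq Hi)); auto.
Qed.

Lemma E2 u : inGN u -> scl u <= Mc * Phis u.
Proof.
  intro Hu. destruct (bavard HG HN Hu) as [phi [Hphi Hsu]].
  destruct (Hspan (qmD_Q HG HN Hphi)) as [c [h [Hh Hc]]].
  assert (Hcj : forall j, (j < l)%nat -> c j = phi (z j)).
  { intros j Hj. rewrite Hc by (apply (inGN_N HG HN); auto). rewrite (H1_vanish HG HN Hh (Hz Hj)).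
    rewrite (rsum_ext (g := fun i => (if Nat.eqb i j then 1 else 0) * c i)).
    rewrite rsum_delta; auto. ring.
    intros i Hi. rewrite Hdl by auto. unfold dl. destruct (Nat.eqb i j); ring. }
  assert (Hcb : forall j, (j < l)%nat -> Rabs (c j) <= 2 * scl (z j)).
  { intros j Hj. rewrite Hcj by auto. pose proof (qm_scl HG HN Hphi (Hz Hj)). lra. }
  eapply Rle_trans. apply Hsu. rewrite Hc by (apply (inGN_N HG HN); auto).
  rewrite (H1_vanish HG HN Hh Hu), Rplus_0_r.
  eapply Rle_trans. apply Rle_abs. eapply Rle_trans. apply rsum_abs.
  unfold Phis. rewrite <- rsum_scal. apply rsum_le. intros i Hi.
  rewrite Rabs_mult. apply Rmult_le_compat_r. apply Rabs_pos.
  eapply Rle_trans. apply Hcb; auto. unfold Mc. apply Rmult_le_compat_l. lra.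
  apply rsum_term with (f := fun j => scl (z j)); auto. intros. apply (scl_ge0 HG HN); auto.
Qed.

Lemma Finv i x : (i < l)%nat -> N x -> F i (inv x) = - F i x.
Proof. intros Hi Hx. apply (qm_inv HG HN (Hq Hi)); auto. Qed.
Lemma Fdef i x y : (i < l)%nat -> N x -> N y -> Rabs (F i (x ** y) - F i x - F i y) <= D.
Proof. intros Hi Hx Hy. apply (qm_def HG HN (Hq Hi)); auto. Qed.

Lemma Fdiff i x y : (i < l)%nat -> N x -> N y -> Rabs (F i (inv x ** y) - (F i y - F i x)) <= D.
Proof.
  intros Hi Hx Hy. pose proof (Fdef Hi (NV HG HN Hx) Hy). rewrite Finv in H by auto.
  replace (F i (inv x ** y) - (F i y - F i x)) with (F i (inv x ** y) - - F i x - F i y) by ring. auto.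
Qed.

Lemma Dl1 x y : N x -> N y -> Phis (inv x ** y) <= Dlt x y + INR l * D.
Proof.
  intros Hx Hy. unfold Phis, Dlt. rewrite <- rsum_const, <- rsum_plus. apply rsum_le. intros i Hi.
  pose proof (Fdiff Hi Hx Hy). pose proof (Rabs_triang_inv (F i (inv x ** y)) (F i y - F i x)). lra.
Qed.
Lemma Dl2 x y : N x -> N y -> Dlt x y <= Phis (inv x ** y) + INR l * D.
Proof.
  intros Hx Hy. unfold Phis, Dlt. rewrite <- rsum_const, <- rsum_plus. apply rsum_le. intros i Hi.
  pose proof (Fdiff Hi Hx Hy). pose proof (Rabs_triang_inv (F i y - F i x) (F i (inv x ** y))).
  rewrite Rabs_minus_sym in H. lra.
Qed.

Lemma dscl_up x y : inGN x -> inGN y -> dscl mul inv e N x y <= Mc * (Dlt x y + INR l * D).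
Proof.
  intros Hx Hy. unfold dscl. eapply Rle_trans. apply E2. apply (inGN_mul HG HN); auto. apply (inGN_inv HG HN); auto.
  apply Rmult_le_compat_l. apply Mc_nn. apply Dl1; apply (inGN_N HG HN); auto.
Qed.
Lemma dscl_low x y : inGN x -> inGN y -> Dlt x y <= INR l * (2 * D * dscl mul inv e N x y) + INR l * D.
Proof.
  intros Hx Hy. eapply Rle_trans. apply Dl2; apply (inGN_N HG HN); auto.
  apply Rplus_le_compat_r. apply E1. apply (inGN_mul HG HN); auto. apply (inGN_inv HG HN); auto.
Qed.

Definition Et : R := INR l * D.

Lemma prodz_GN v n : (n <= l)%nat -> inGN (prodz mul inv e z v n).
Proof.
  induction n; intro Hn; simpl. apply (inGN_e HG HN).
  apply (inGN_mul HG HN). apply IHn; lia. apply (inGN_zp HG HN). apply Hz; lia.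
Qed.

Lemma prodz_coord v n i : (n <= l)%nat -> (i < l)%nat ->
  Rabs (F i (prodz mul inv e z v n) - rsum (fun j => IZR (v j) * dl i j) n) <= INR n * D.
Proof.
  intros Hn Hi. induction n; cbn [prodz rsum].
  - rewrite (qm_e HG HN (Hq Hi)). rewrite Rminus_0_r, Rabs_R0. simpl. lra.
  - assert (HzN : N (z n)) by (apply (inGN_N HG HN); apply Hz; lia).
    pose proof (Fdef Hi (inGN_N HG HN (prodz_GN v (ltac:(lia) : (n <= l)%nat))) (Nzp HG HN (v n) HzN)).
    rewrite (qm_zp HG HN (Hq Hi)) in H by auto. rewrite Hdl in H by lia.
    specialize (IHn ltac:(lia)). rewrite S_INR.
    replace (F i (prodz mul inv e z v n ** zp (z n) (v n)) - (rsum (fun j => IZR (v j) * dl i j) n + IZR (v n) * dl i n))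
      with ((F i (prodz mul inv e z v n ** zp (z n) (v n)) - F i (prodz mul inv e z v n) - IZR (v n) * dl i n) +
            (F i (prodz mul inv e z v n) - rsum (fun j => IZR (v j) * dl i j) n)) by ring.
    eapply Rle_trans. apply Rabs_triang. lra.
Qed.

Lemma tau_coord v i : (i < l)%nat -> Rabs (F i (prodz mul inv e z v l) - IZR (v i)) <= Et.
Proof.
  intro Hi. pose proof (prodz_coord v (le_n l) Hi).
  replace (rsum (fun j => IZR (v j) * dl i j) l) with (IZR (v i)) in H; auto.
  rewrite (rsum_ext (g := fun j => (if Nat.eqb j i then 1 else 0) * IZR (v j))).
  rewrite rsum_delta; auto.
  intros j Hj. unfold dl. destruct (Nat.eqb_spec i j); destruct (Nat.eqb_spec j i); subst; try lia; ring.
Qed.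


Lemma rsum_close f g n c : (forall i, (i < n)%nat -> Rabs (f i - g i) <= c) -> Rabs (rsum f n - rsum g n) <= INR n * c.
Proof.
  intro H. rewrite <- rsum_minus. eapply Rle_trans. apply rsum_abs. rewrite <- rsum_const. apply rsum_le. auto.
Qed.
Lemma abs_diff_closeE a b a' b' E : Rabs (a - a') <= E -> Rabs (b - b') <= E -> Rabs (Rabs (b - a) - Rabs (b' - a')) <= 2 * E.
Proof.
  intros H1 H2. eapply Rle_trans. apply Rabs_triang_inv2.
  replace (b - a - (b' - a')) with ((b - b') - (a - a')) by ring.
  eapply Rle_trans. apply Rabs_triang. rewrite Rabs_Ropp. lra.
Qed.

Definition sig_fun (x : T) : nat -> Z := fun i => if Nat.ltb i l then rho (F i x) else 0%Z.
Lemma sig_ok x : forall i, (l <= i)%nat -> sig_fun x i = 0%Z.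
Proof. intros i Hi. unfold sig_fun. destruct (Nat.ltb_spec i l). lia. auto. Qed.
Definition sigma (x : T) : Zl l := exist _ (sig_fun x) (sig_ok x).
Definition tau (v : Zl l) : T := prodz mul inv e z (proj1_sig v) l.

Lemma sig_val x i : (i < l)%nat -> proj1_sig (sigma x) i = rho (F i x).
Proof. intro Hi. simpl. unfold sig_fun. destruct (Nat.ltb_spec i l). auto. lia. Qed.

Lemma dist1_eq (v w : Zl l) : dist1 v w = rsum (fun i => Rabs (IZR (proj1_sig w i) - IZR (proj1_sig v i))) l.
Proof. unfold dist1. rewrite zsum_IZR. apply rsum_ext. intros i Hi. rewrite abs_IZR, minus_IZR. auto. Qed.

Lemma tau_coordZ (v : Zl l) i : (i < l)%nat -> Rabs (F i (tau v) - IZR (proj1_sig v i)) <= Et.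
Proof. intro Hi. apply (tau_coord (proj1_sig v) Hi). Qed.

Lemma Zl_add_val (v w : Zl l) i : proj1_sig (Zl_add v w) i = (proj1_sig v i + proj1_sig w i)%Z.
Proof. reflexivity. Qed.

Lemma tau_GN v : inGN (tau v).
Proof. apply prodz_GN; auto. Qed.

Lemma S1 x y : Rabs (dist1 (sigma x) (sigma y) - Dlt x y) <= INR l * 2.
Proof.
  rewrite dist1_eq. unfold Dlt. apply rsum_close. intros i Hi. rewrite !sig_val by auto.
  eapply Rle_trans. apply abs_diff_closeE; apply rho_close. lra.
Qed.

Lemma T1 v w : Rabs (Dlt (tau v) (tau w) - dist1 v w) <= INR l * (2 * Et).
Proof.
  rewrite dist1_eq. unfold Dlt. apply rsum_close. intros i Hi.
  apply abs_diff_closeE; apply tau_coord; auto.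
Qed.

Definition Kc : R := Mc + INR l * (2 * D) + 1.
Definition Bc : R := INR l * 2 + INR l * D + INR l * (2 * Et).

Lemma Et_nn : 0 <= Et.
Proof. unfold Et. apply Rmult_le_pos; auto. apply pos_INR. Qed.
Lemma Bc_nn : 0 <= Bc.
Proof. unfold Bc. pose proof (pos_INR l). pose proof Et_nn. assert (0 <= INR l * D) by (apply Rmult_le_pos; auto). nra. Qed.
Lemma Kc_ge1 : 1 <= Kc.
Proof. unfold Kc. pose proof Mc_nn. pose proof (pos_INR l). assert (0 <= INR l * (2 * D)) by (apply Rmult_le_pos; lra). lra. Qed.

Lemma dist1_nn (v w : Zl l) : 0 <= dist1 v w.
Proof. rewrite dist1_eq. apply rsum_nonneg. intros. apply Rabs_pos. Qed.
Lemma dscl_nn x y : inGN x -> inGN y -> 0 <= dscl mul inv e N x y.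
Proof. intros. unfold dscl. apply (scl_ge0 HG HN). apply (inGN_mul HG HN); auto. apply (inGN_inv HG HN); auto. Qed.

Lemma sig_low x y : inGN x -> inGN y -> dscl mul inv e N x y <= Kc * (dist1 (sigma x) (sigma y) + Bc).
Proof.
  intros Hx Hy. pose proof (dscl_up Hx Hy). pose proof (S1 x y). apply Rabs_le_between in H0.
  pose proof Mc_nn. pose proof (dist1_nn (sigma x) (sigma y)). pose proof Bc_nn. pose proof Et_nn.
  assert (Dlt x y + INR l * D <= dist1 (sigma x) (sigma y) + Bc) by (unfold Bc; pose proof (pos_INR l); nra).
  assert (Mc <= Kc) by (unfold Kc; pose proof (pos_INR l); assert (0 <= INR l * (2 * D)) by (apply Rmult_le_pos; lra); lra).
  eapply Rle_trans. apply H. apply Rmult_le_compat; auto. unfold Dlt. assert (0 <= rsum (fun i => Rabs (F i y - F i x)) l) by (apply rsum_nonneg; intros; apply Rabs_pos).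
  pose proof (pos_INR l). nra.
Qed.

Lemma sig_up x y : inGN x -> inGN y -> dist1 (sigma x) (sigma y) <= Kc * dscl mul inv e N x y + Bc.
Proof.
  intros Hx Hy. pose proof (dscl_low Hx Hy). pose proof (S1 x y). apply Rabs_le_between in H0.
  pose proof (dscl_nn Hx Hy). pose proof Mc_nn. pose proof (pos_INR l). pose proof Et_nn.
  assert (INR l * (2 * D * dscl mul inv e N x y) <= Kc * dscl mul inv e N x y).
  { unfold Kc. replace (INR l * (2 * D * dscl mul inv e N x y)) with ((INR l * (2 * D)) * dscl mul inv e N x y) by ring.
    apply Rmult_le_compat_r; auto. lra. }
  assert (0 <= INR l * (2 * Et)) by (apply Rmult_le_pos; lra).
  unfold Bc. lra.
Qed.

Lemma tau_up v w : dscl mul inv e N (tau v) (tau w) <= Kc * (dist1 v w + Bc).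
Proof.
  pose proof (dscl_up (tau_GN v) (tau_GN w)). pose proof (T1 v w). apply Rabs_le_between in H0.
  pose proof Mc_nn. pose proof (dist1_nn v w). pose proof Bc_nn. pose proof Et_nn.
  assert (Dlt (tau v) (tau w) + INR l * D <= dist1 v w + Bc) by (unfold Bc; pose proof (pos_INR l); nra).
  assert (Mc <= Kc) by (unfold Kc; pose proof (pos_INR l); assert (0 <= INR l * (2 * D)) by (apply Rmult_le_pos; lra); lra).
  eapply Rle_trans. apply H. apply Rmult_le_compat; auto.
  unfold Dlt. assert (0 <= rsum (fun i => Rabs (F i (tau w) - F i (tau v))) l) by (apply rsum_nonneg; intros; apply Rabs_pos).
  pose proof (pos_INR l). nra.
Qed.

Lemma tau_low v w : dist1 v w <= Kc * dscl mul inv e N (tau v) (tau w) + Bc.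
Proof.
  pose proof (dscl_low (tau_GN v) (tau_GN w)). pose proof (T1 v w). apply Rabs_le_between in H0.
  pose proof (dscl_nn (tau_GN v) (tau_GN w)). pose proof Mc_nn. pose proof (pos_INR l). pose proof Et_nn.
  assert (INR l * (2 * D * dscl mul inv e N (tau v) (tau w)) <= Kc * dscl mul inv e N (tau v) (tau w)).
  { unfold Kc. replace (INR l * (2 * D * dscl mul inv e N (tau v) (tau w))) with ((INR l * (2 * D)) * dscl mul inv e N (tau v) (tau w)) by ring.
    apply Rmult_le_compat_r; auto. lra. }
  unfold Bc. lra.
Qed.

Lemma assembly :
  exists (sigma : T -> Zl l) (tau : Zl l -> T),
    (forall v, in_GN mul inv e N (tau v)) /\
    (exists D, forall x y, in_GN mul inv e N x -> in_GN mul inv e N y ->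
        dist1 (sigma (mul x y)) (Zl_add (sigma x) (sigma y)) <= D) /\
    (exists D, forall v w,
        dscl mul inv e N (tau (Zl_add v w)) (mul (tau v) (tau w)) <= D) /\
    (forall r, exists s, forall x y, in_GN mul inv e N x -> in_GN mul inv e N y ->
        dscl mul inv e N x y <= r -> dist1 (sigma x) (sigma y) <= s) /\
    (forall r, exists s, forall v w,
        dist1 v w <= r -> dscl mul inv e N (tau v) (tau w) <= s) /\
    (exists D, (forall x, in_GN mul inv e N x ->
                   dscl mul inv e N (tau (sigma x)) x <= D) /\
               (forall v, dist1 (sigma (tau v)) v <= D)) /\
    (exists C1 C2 D1 D2, 0 < C1 /\
       (forall x y, in_GN mul inv e N x -> in_GN mul inv e N y ->
          C1 * dscl mul inv e N x y - D1 <= dist1 (sigma x) (sigma y) /\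
          dist1 (sigma x) (sigma y) <= C2 * dscl mul inv e N x y + D2) /\
       (forall v w,
          C1 * dist1 v w - D1 <= dscl mul inv e N (tau v) (tau w) /\
          dscl mul inv e N (tau v) (tau w) <= C2 * dist1 v w + D2)).
Proof.
  pose proof Kc_ge1 as HK. pose proof Bc_nn as HB. pose proof Mc_nn as HM. pose proof Et_nn as HEt.
  pose proof (pos_INR l) as Hl.
  assert (HlD : 0 <= INR l * D) by (apply Rmult_le_pos; lra).
  exists sigma, tau. split; [|split; [|split; [|split; [|split; [|split]]]]].
  - apply tau_GN.
  - exists (INR l * (D + 3)). intros x y Hx Hy.
    assert (HxN : N x) by (apply (inGN_N HG HN); auto). assert (HyN : N y) by (apply (inGN_N HG HN); auto).
    rewrite dist1_eq. rewrite <- rsum_const. apply rsum_le. intros i Hi.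
    rewrite Zl_add_val, !sig_val by auto. rewrite plus_IZR.
    pose proof (rho_close (F i x)). pose proof (rho_close (F i y)). pose proof (rho_close (F i (x ** y))).
    pose proof (Fdef Hi HxN HyN).
    apply Rabs_le. apply Rabs_le_between in H. apply Rabs_le_between in H0. apply Rabs_le_between in H1.
    apply Rabs_le_between in H2. lra.
  - exists (Mc * (INR l * (D + 3 * Et) + INR l * D)). intros v w.
    eapply Rle_trans. apply dscl_up. apply tau_GN. apply (inGN_mul HG HN); apply tau_GN.
    apply Rmult_le_compat_l; auto. apply Rplus_le_compat_r. unfold Dlt. rewrite <- rsum_const. apply rsum_le.
    intros i Hi. pose proof (tau_coordZ v Hi). pose proof (tau_coordZ w Hi). pose proof (tau_coordZ (Zl_add v w) Hi).
    pose proof (Fdef Hi (inGN_N HG HN (tau_GN v)) (inGN_N HG HN (tau_GN w))).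
    rewrite Zl_add_val, plus_IZR in H1.
    apply Rabs_le_between in H. apply Rabs_le_between in H0. apply Rabs_le_between in H1. apply Rabs_le_between in H2.
    apply Rabs_le. lra.
  - intros r. exists (Kc * r + Bc). intros x y Hx Hy Hr. eapply Rle_trans. apply sig_up; auto.
    apply Rplus_le_compat_r. apply Rmult_le_compat_l; lra.
  - intros r. exists (Kc * (r + Bc)). intros v w Hr. eapply Rle_trans. apply tau_up.
    apply Rmult_le_compat_l; lra.
  - exists (Mc * (INR l * (1 + Et) + INR l * D) + INR l * (1 + Et)). split.
    + intros x Hx. eapply Rle_trans. apply dscl_up. apply tau_GN. auto.
      assert (Dlt (tau (sigma x)) x <= INR l * (1 + Et)).
      { unfold Dlt. rewrite <- rsum_const. apply rsum_le. intros i Hi.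
        pose proof (tau_coordZ (sigma x) Hi). rewrite sig_val in H by auto. pose proof (rho_close (F i x)).
        apply Rabs_le_between in H. apply Rabs_le_between in H0. apply Rabs_le. lra. }
      assert (0 <= INR l * (1 + Et)) by (apply Rmult_le_pos; lra).
      assert (Mc * (Dlt (tau (sigma x)) x + INR l * D) <= Mc * (INR l * (1 + Et) + INR l * D)) by (apply Rmult_le_compat_l; lra).
      lra.
    + intros v. rewrite dist1_eq.
      assert (rsum (fun i => Rabs (IZR (proj1_sig v i) - IZR (proj1_sig (sigma (tau v)) i))) l <= INR l * (1 + Et)).
      { rewrite <- rsum_const. apply rsum_le. intros i Hi. rewrite sig_val by auto.
        pose proof (tau_coordZ v Hi). pose proof (rho_close (F i (tau v))).
        apply Rabs_le_between in H. apply Rabs_le_between in H0. apply Rabs_le. lra. }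
      assert (0 <= Mc * (INR l * (1 + Et) + INR l * D)) by (apply Rmult_le_pos; auto; assert (0 <= INR l * (1 + Et)) by (apply Rmult_le_pos; lra); lra).
      lra.
  - exists (/ Kc), Kc, Bc, ((1 + Kc) * Bc). split. apply Rinv_0_lt_compat; lra. split.
    + intros x y Hx Hy. split.
      * pose proof (sig_low Hx Hy). pose proof (dist1_nn (sigma x) (sigma y)).
        assert (/ Kc * dscl mul inv e N x y <= dist1 (sigma x) (sigma y) + Bc).
        { apply Rmult_le_reg_l with Kc. lra. rewrite <- Rmult_assoc, Rinv_r, Rmult_1_l by lra. auto. }
        lra.
      * pose proof (sig_up Hx Hy). assert (0 <= Kc * Bc) by (apply Rmult_le_pos; lra). lra.
    + intros v w. split.
      * pose proof (tau_low v w). pose proof (dscl_nn (tau_GN v) (tau_GN w)).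
        assert (/ Kc * dist1 v w <= dscl mul inv e N (tau v) (tau w) + Bc).
        { apply Rmult_le_reg_l with Kc. lra. rewrite <- Rmult_assoc, Rinv_r by lra. rewrite Rmult_1_l.
          nra. }
        lra.
      * pose proof (tau_up v w). assert (0 <= Kc * Bc) by (apply Rmult_le_pos; lra). lra.
Qed.

End Final.

End G8.
Import G8.

Local Open Scope R_scope.

Lemma qmD_mono {T : Type} (mul : T -> T -> T) (inv : T -> T) (e : T) (N : T -> Prop) D D' f :
  qmD mul inv e N D f -> D <= D' -> qmD mul inv e N D' f.
Proof.
  intros [H1 [H2 H3]] HD. split; auto. split; auto. intros. eapply Rle_trans. apply H2; auto. auto.
Qed.

Theorem proposition1p1 (T : Type) (mul : T -> T -> T) (inv : T -> T) (e : T)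
  (HG : is_group mul inv e) (N : T -> Prop)
  (HN : is_normal_subgroup mul inv e N) (l : nat)
  (Hdim : quot_dim_eq mul inv e N l) :
  exists (sigma : T -> Zl l) (tau : Zl l -> T),
    (* tau takes values in [G,N] *)
    (forall v, in_GN mul inv e N (tau v)) /\
    (* sigma and tau are pre-coarse homomorphisms *)
    (exists D, forall x y, in_GN mul inv e N x -> in_GN mul inv e N y ->
        dist1 (sigma (mul x y)) (Zl_add (sigma x) (sigma y)) <= D) /\
    (exists D, forall v w,
        dscl mul inv e N (tau (Zl_add v w)) (mul (tau v) (tau w)) <= D) /\
    (* sigma and tau are controlled *)
    (forall r, exists s, forall x y, in_GN mul inv e N x -> in_GN mul inv e N y ->
        dscl mul inv e N x y <= r -> dist1 (sigma x) (sigma y) <= s) /\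
    (forall r, exists s, forall v w,
        dist1 v w <= r -> dscl mul inv e N (tau v) (tau w) <= s) /\
    (* sigma and tau are coarse inverse to each other *)
    (exists D, (forall x, in_GN mul inv e N x ->
                   dscl mul inv e N (tau (sigma x)) x <= D) /\
               (forall v, dist1 (sigma (tau v)) v <= D)) /\
    (* the coarse isomorphism is a quasi-isometry *)
    (exists C1 C2 D1 D2, 0 < C1 /\
       (forall x y, in_GN mul inv e N x -> in_GN mul inv e N y ->
          C1 * dscl mul inv e N x y - D1 <= dist1 (sigma x) (sigma y) /\
          dist1 (sigma x) (sigma y) <= C2 * dscl mul inv e N x y + D2) /\
       (forall v w,
          C1 * dist1 v w - D1 <= dscl mul inv e N (tau v) (tau w) /\
          dscl mul inv e N (tau v) (tau w) <= C2 * dist1 v w + D2)).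
Proof.
  destruct (dual_basis HG HN Hdim) as [F [z [I1 [I2 [I3 [I4 I5]]]]]].
  assert (HD : forall n, (n <= l)%nat -> exists D, 0 <= D /\ forall i, (i < n)%nat -> qmD mul inv e N D (F i)).
  { induction n; intro Hn.
    - exists 0. split. lra. intros; lia.
    - destruct (IHn ltac:(lia)) as [D [HD0 HDi]].
      destruct (QinvD HG HN (I1 n ltac:(lia))) as [Dn HDn].
      exists (Rmax D Dn). split. eapply Rle_trans; [apply HD0|apply Rmax_l].
      intros i Hi. destruct (Nat.eq_dec i n) as [->|Hne].
      + apply qmD_mono with Dn; auto. apply Rmax_r.
      + apply qmD_mono with D. apply HDi; lia. apply Rmax_l. }
  destruct (HD l (le_n l)) as [D [HD0 Hq]].
  exact (assembly HG HN HD0 Hq (fun i j Hi Hj => I2 i j Hi Hj) I3 I4).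
Qed.
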